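(* Let $A,B\in\mathbb{C}$ with $|A|\leq1$, $|B|<1$, and let \[ \gamma\geq \frac{4(|A|+|B|)}{1-|B|}. \] If $f\in\mathcal{A}$ satisfies \[ 1+\gamma\left(1+\frac{zf''(z)}{f'(z)}-\frac{zf'(z)}{f(z)}\right)\prec\frac{1+A z}{1+B z}\quad (z\in\mathbb{D}), \] then $f\in\mathcal{SL}^*$.
   Context: $\mathbb{D}$ is the open unit disk. $\mathcal{A}$ is the class of functions $f$ analytic in $\mathbb{D}$ with $f(0)=0$, $f'(0)=1$. $\mathcal{SL}^*$ is the class of $f\in\mathcal{A}$ with $\left|\left(\frac{zf'(z)}{f(z)}\right)^2-1\right|<1$ for all $z\in\mathbb{D}$. For analytic $F,G$ on $\mathbb{D}$, $F\prec G$ means $F=G\circ\omega$ for some analytic $\omega:\mathbb{D}\to\mathbb{D}$ with $\omega(0)=0$. The left-hand side of the subordination is assumed analytic in $\mathbb{D}$. *)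

(* Defs.v *)
From Stdlib Require Import Reals.
From Coquelicot Require Import Coquelicot.

Open Scope C_scope.

Definition inD (z : C) : Prop := (Cmod z < 1)%R.

Definition has_deriv_on_D (g dg : C -> C) : Prop :=
  forall z : C, inD z -> @is_derive C_AbsRing C_NormedModule g z (dg z).

Definition analytic_on_D (g : C -> C) : Prop :=
  forall z : C, inD z -> @ex_derive C_AbsRing C_NormedModule g z.

Definition subordinate (F G : C -> C) : Prop :=
  exists w : C -> C, analytic_on_D w /\ w 0 = 0 /\
    (forall z, inD z -> inD (w z)) /\
    (forall z, inD z -> F z = G (w z)).

(* z f'(z)/f(z), extended by its removable value 1 at z = 0
   (since f(0)=0, f'(0)=1) *)
Definition zfp_over_f (f f1 : C -> C) (z : C) : C :=
  if Ceq_dec z 0 then 1 else z * f1 z / f z.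

Definition classA (f f1 : C -> C) : Prop :=
  analytic_on_D f /\ has_deriv_on_D f f1 /\ f 0 = 0 /\ f1 0 = 1.

Definition SLstar (f f1 : C -> C) : Prop :=
  (forall z, inD z -> z <> 0 -> f z <> 0) /\
  (forall z, inD z -> (Cmod ((zfp_over_f f f1 z) ^ 2 - 1) < 1)%R).

(* Main.v *)
Require Import Defs.
From Stdlib Require Import Reals.
From Coquelicot Require Import Coquelicot.
From Stdlib Require Import Lra Lia Psatz List ZArith.
Open Scope C_scope.

(* Proof outline:
   - a small theory of contour integrals (Goursat for rectangles, exceptional
     points, primitive on a disk, Cauchy integral formula on circles),
   - the Schwarz lemma (via Cauchy integral formula + Landau's power trick),
   - Schwarz gives |z p'/p| <= |z|/4 where p = z f'/f, and a Gronwall-type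
     estimate along the ray [0,z] gives |p(z)^2 - 1| <= e^(1/2)-1+eps < 1. *)

Module Helpers.
Local Open Scope R_scope.

Lemma Cmod_le_re_im (z : C) : Cmod z <= Rabs (fst z) + Rabs (snd z).
Proof.
  destruct z as [x y]; unfold Cmod; simpl.
  apply Rsqr_incr_0_var.
  - rewrite Rsqr_sqrt by nra. unfold Rsqr.
    pose proof (Rabs_pos x); pose proof (Rabs_pos y).
    replace (x*(x*1)+y*(y*1)) with (Rabs x * Rabs x + Rabs y * Rabs y).
    nra. rewrite <- !Rabs_mult. rewrite !Rabs_right by nra. ring.
  - pose proof (Rabs_pos x); pose proof (Rabs_pos y); lra.
Qed.

Lemma re_le_Cmod' (z : C) : Rabs (fst z) <= Cmod z.
Proof. apply re_le_Cmod. Qed.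

Lemma im_le_Cmod' (z : C) : Rabs (snd z) <= Cmod z.
Proof.
  destruct z as [x y]; unfold Cmod; simpl.
  rewrite <- sqrt_Rsqr_abs. apply sqrt_le_1_alt. unfold Rsqr. nra.
Qed.

Lemma Cmod_RtoC (r : R) : Cmod (RtoC r) = Rabs r.
Proof. apply Cmod_R. Qed.

Definition cderiv (F : C -> C) (z l : C) : Prop :=
  forall eps : R, 0 < eps -> exists delta : R, 0 < delta /\
    forall h : C, Cmod h < delta -> Cmod (F (z + h)%C - F z - l * h)%C <= eps * Cmod h.

Definition ccont (F : C -> C) (z : C) : Prop :=
  forall eps : R, 0 < eps -> exists delta : R, 0 < delta /\
    forall u : C, Cmod (u - z)%C < delta -> Cmod (F u - F z)%C < eps.

Definition pderiv (g : R -> C) (t : R) (v : C) : Prop :=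
  forall eps : R, 0 < eps -> exists delta : R, 0 < delta /\
    forall h : R, Rabs h < delta -> Cmod (g (t + h)%R - g t - RtoC h * v)%C <= eps * Rabs h.

Definition pcont (g : R -> C) (t : R) : Prop :=
  forall eps : R, 0 < eps -> exists delta : R, 0 < delta /\
    forall s : R, Rabs (s - t) < delta -> Cmod (g s - g t)%C < eps.

Lemma Cmod_sub_sym (a b : C) : Cmod (a - b)%C = Cmod (b - a)%C.
Proof. rewrite <- Cmod_opp. f_equal. ring. Qed.

Lemma is_derive_cderiv (F : C -> C) (z l : C) :
  @is_derive C_AbsRing C_NormedModule F z l -> cderiv F z l.
Proof.
  intros [_ H] eps Heps.
  specialize (H z (fun P HP => HP)).
  specialize (H (mkposreal eps Heps)).
  destruct H as [d Hd]. simpl in Hd.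
  exists (d / 2)%R. split. destruct d; simpl; lra.
  intros h Hh.
  assert (Hb : @ball (AbsRing_UniformSpace C_AbsRing) z d (z + h)%C).
  { unfold ball; simpl; unfold AbsRing_ball, abs, minus, plus, opp; simpl.
    replace (z + h + - z)%C with h by ring. destruct d; simpl in *; lra. }
  specialize (Hd _ Hb).
  change (Cmod (F (z + h)%C + - F z + - ((z + h + - z) * l)) <= eps * Cmod (z + h + - z)) in Hd.
  replace (z + h + - z)%C with h in Hd by ring.
  replace (F (z + h)%C + - F z + - (h * l))%C with (F (z + h) - F z - l * h)%C in Hd by ring.
  exact Hd.
Qed.

Lemma cderiv_is_derive (F : C -> C) (z l : C) :
  cderiv F z l -> @is_derive C_AbsRing C_NormedModule F z l.
Proof.
  intros H. split.
  - apply is_linear_scal_l.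
  - intros x Hx. apply (@is_filter_lim_locally_unique C_AbsRing (AbsRing_NormedModule C_AbsRing)) in Hx. subst x.
    intros [eps Heps].
    destruct (H eps Heps) as [d [Hd Hd']].
    exists (mkposreal d Hd). intros y Hy. simpl. change C in y.
    unfold ball in Hy; simpl in Hy; unfold AbsRing_ball, abs, minus, plus, opp in Hy; simpl in Hy.
    specialize (Hd' (y + - z)%C Hy).
    replace (z + (y + - z))%C with y in Hd' by ring.
    change (Cmod (F y + - F z + - ((y + - z) * l)) <= eps * Cmod (y + - z)).
    replace (F y + - F z + - ((y + - z) * l))%C with (F y - F z - l * (y + - z))%C by ring.
    exact Hd'.
Qed.

Lemma is_derive_cderiv' (F : C -> C) (z l : C) :
  @is_derive C_AbsRing (AbsRing_NormedModule C_AbsRing) F z l -> cderiv F z l.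
Proof.
  intros [_ H] eps Heps.
  specialize (H z (fun P HP => HP)).
  specialize (H (mkposreal eps Heps)).
  destruct H as [d Hd]. simpl in Hd.
  exists (d / 2)%R. split. destruct d; simpl; lra.
  intros h Hh.
  assert (Hb : @ball (AbsRing_UniformSpace C_AbsRing) z d (z + h)%C).
  { unfold ball; simpl; unfold AbsRing_ball, abs, minus, plus, opp; simpl.
    replace (z + h + - z)%C with h by ring. destruct d; simpl in *; lra. }
  specialize (Hd _ Hb).
  change (Cmod (F (z + h)%C + - F z + - ((z + h + - z) * l)) <= eps * Cmod (z + h + - z)) in Hd.
  replace (z + h + - z)%C with h in Hd by ring.
  replace (F (z + h)%C + - F z + - (h * l))%C with (F (z + h) - F z - l * h)%C in Hd by ring.
  exact Hd.
Qed.

Lemma cderiv_is_derive' (F : C -> C) (z l : C) :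
  cderiv F z l -> @is_derive C_AbsRing (AbsRing_NormedModule C_AbsRing) F z l.
Proof.
  intros H. split.
  - apply is_linear_scal_l.
  - intros x Hx. apply (@is_filter_lim_locally_unique C_AbsRing (AbsRing_NormedModule C_AbsRing)) in Hx. subst x.
    intros [eps Heps].
    destruct (H eps Heps) as [d [Hd Hd']].
    exists (mkposreal d Hd). intros y Hy. simpl. change C in y.
    unfold ball in Hy; simpl in Hy; unfold AbsRing_ball, abs, minus, plus, opp in Hy; simpl in Hy.
    specialize (Hd' (y + - z)%C Hy).
    replace (z + (y + - z))%C with y in Hd' by ring.
    change (Cmod (F y + - F z + - ((y + - z) * l)) <= eps * Cmod (y + - z)).
    replace (F y + - F z + - ((y + - z) * l))%C with (F y - F z - l * (y + - z))%C by ring.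
    exact Hd'.
Qed.

Lemma ex_derive_cderiv (F : C -> C) (z : C) :
  @ex_derive C_AbsRing C_NormedModule F z -> exists l, cderiv F z l.
Proof. intros [l Hl]. exists l. now apply is_derive_cderiv. Qed.

Lemma cderiv_ccont F z l : cderiv F z l -> ccont F z.
Proof.
  intros H eps Heps.
  destruct (H 1 Rlt_0_1) as [d [Hd Hd']].
  set (M := Cmod l + 1).
  assert (HM : 0 < M) by (unfold M; pose proof (Cmod_ge_0 l); lra).
  exists (Rmin d (eps / (2 * M))). split.
  { apply Rmin_pos; auto. apply Rdiv_lt_0_compat; lra. }
  intros u Hu.
  pose proof (Rmin_l d (eps / (2*M))) as H1. pose proof (Rmin_r d (eps / (2*M))) as H2.
  specialize (Hd' (u - z)%C ltac:(lra)).
  replace (z + (u - z))%C with u in Hd' by ring.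
  pose proof (Cmod_triangle (F u - F z - l * (u - z)) (l * (u - z)))%C as T.
  replace (F u - F z - l * (u - z) + l * (u - z))%C with (F u - F z)%C in T by ring.
  rewrite Cmod_mult in T.
  pose proof (Cmod_ge_0 (u - z)%C). pose proof (Cmod_ge_0 l).
  assert (Cmod (u - z)%C * M <= eps / 2).
  { apply Rle_trans with (eps / (2 * M) * M).
    - apply Rmult_le_compat_r; lra.
    - right; field; lra. }
  unfold M in *. nra.
Qed.

Lemma pderiv_pcont g t v : pderiv g t v -> pcont g t.
Proof.
  intros H eps Heps.
  destruct (H 1 Rlt_0_1) as [d [Hd Hd']].
  set (M := Cmod v + 1).
  assert (HM : 0 < M) by (unfold M; pose proof (Cmod_ge_0 v); lra).
  exists (Rmin d (eps / (2 * M))). split.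
  { apply Rmin_pos; auto. apply Rdiv_lt_0_compat; lra. }
  intros s Hs.
  pose proof (Rmin_l d (eps / (2*M))) as H1. pose proof (Rmin_r d (eps / (2*M))) as H2.
  specialize (Hd' (s - t) ltac:(lra)).
  replace (t + (s - t)) with s in Hd' by ring.
  pose proof (Cmod_triangle (g s - g t - RtoC (s - t) * v) (RtoC (s - t) * v))%C as T.
  replace (g s - g t - RtoC (s - t) * v + RtoC (s - t) * v)%C with (g s - g t)%C in T by ring.
  rewrite Cmod_mult, Cmod_R in T.
  pose proof (Rabs_pos (s - t)). pose proof (Cmod_ge_0 v).
  assert (Rabs (s - t) * M <= eps / 2).
  { apply Rle_trans with (eps / (2 * M) * M).
    - apply Rmult_le_compat_r; lra.
    - right; field; lra. }
  unfold M in *. nra.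
Qed.

Lemma pcont_comp (F : C -> C) (g : R -> C) t :
  pcont g t -> ccont F (g t) -> pcont (fun s => F (g s)) t.
Proof.
  intros Hg HF eps Heps.
  destruct (HF eps Heps) as [d [Hd Hd']].
  destruct (Hg d Hd) as [e [He He']].
  exists e; split; auto.
Qed.

Lemma pcont_fst g t : pcont g t -> continuous (fun s => fst (g s)) t.
Proof.
  intros H. apply continuity_pt_filterlim.
  intros eps Heps. destruct (H eps Heps) as [d [Hd Hd']].
  exists d; split; auto. intros s [_ Hs]. simpl in Hs |- *. unfold Rdist in *.
  eapply Rle_lt_trans; [|apply (Hd' s Hs)].
  replace (fst (g s) - fst (g t)) with (fst (g s - g t)%C) by (simpl; ring).
  apply re_le_Cmod'.
Qed.

Lemma pcont_snd g t : pcont g t -> continuous (fun s => snd (g s)) t.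
Proof.
  intros H. apply continuity_pt_filterlim.
  intros eps Heps. destruct (H eps Heps) as [d [Hd Hd']].
  exists d; split; auto. intros s [_ Hs]. simpl in Hs |- *. unfold Rdist in *.
  eapply Rle_lt_trans; [|apply (Hd' s Hs)].
  replace (snd (g s) - snd (g t)) with (snd (g s - g t)%C) by (simpl; ring).
  apply im_le_Cmod'.
Qed.

Lemma pderiv_fst g t v : pderiv g t v -> is_derive (fun s => fst (g s)) t (fst v).
Proof.
  intros H. apply is_derive_Reals.
  intros eps Heps.
  destruct (H (eps/2) ltac:(lra)) as [d [Hd Hd']].
  exists (mkposreal d Hd). intros h Hh0 Hh. simpl in Hh.
  specialize (Hd' h Hh).
  pose proof (re_le_Cmod' (g (t + h)%R - g t - RtoC h * v)%C) as Hre.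
  replace (fst (g (t + h)%R - g t - RtoC h * v)%C) with
    (h * ((fst (g (t + h)) - fst (g t)) / h - fst v)) in Hre by (simpl; field; auto).
  rewrite Rabs_mult in Hre.
  pose proof (Rabs_pos_lt h Hh0).
  assert (Rabs ((fst (g (t + h)) - fst (g t)) / h - fst v) <= eps / 2).
  { apply Rmult_le_reg_l with (Rabs h); auto. nra. }
  lra.
Qed.

Lemma pderiv_snd g t v : pderiv g t v -> is_derive (fun s => snd (g s)) t (snd v).
Proof.
  intros H. apply is_derive_Reals.
  intros eps Heps.
  destruct (H (eps/2) ltac:(lra)) as [d [Hd Hd']].
  exists (mkposreal d Hd). intros h Hh0 Hh. simpl in Hh.
  specialize (Hd' h Hh).
  pose proof (im_le_Cmod' (g (t + h)%R - g t - RtoC h * v)%C) as Hre.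
  replace (snd (g (t + h)%R - g t - RtoC h * v)%C) with
    (h * ((snd (g (t + h)) - snd (g t)) / h - snd v)) in Hre by (simpl; field; auto).
  rewrite Rabs_mult in Hre.
  pose proof (Rabs_pos_lt h Hh0).
  assert (Rabs ((snd (g (t + h)) - snd (g t)) / h - snd v) <= eps / 2).
  { apply Rmult_le_reg_l with (Rabs h); auto. nra. }
  lra.
Qed.

Lemma cderiv_ext (F G : C -> C) (z l : C) : (forall u, F u = G u) -> cderiv F z l -> cderiv G z l.
Proof. intros E H eps He. destruct (H eps He) as [d [Hd H']]. exists d; split; auto.
  intros h Hh. rewrite <- !E. auto. Qed.

Lemma cderiv_plus (F G : C -> C) (z a b : C) : cderiv F z a -> cderiv G z b -> cderiv (fun u => F u + G u)%C z (a + b)%C.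
Proof.
  intros HF HG. apply is_derive_cderiv.
  apply cderiv_is_derive in HF; apply cderiv_is_derive in HG.
  exact (@is_derive_plus C_AbsRing C_NormedModule F G z a b HF HG).
Qed.

Lemma cderiv_opp (F : C -> C) (z a : C) : cderiv F z a -> cderiv (fun u => - F u)%C z (- a)%C.
Proof.
  intros HF. apply is_derive_cderiv.
  apply cderiv_is_derive in HF.
  exact (@is_derive_opp C_AbsRing C_NormedModule F z a HF).
Qed.

Lemma cderiv_minus (F G : C -> C) (z a b : C) : cderiv F z a -> cderiv G z b -> cderiv (fun u => F u - G u)%C z (a - b)%C.
Proof.
  intros HF HG. apply is_derive_cderiv.
  apply cderiv_is_derive in HF; apply cderiv_is_derive in HG.
  exact (@is_derive_minus C_AbsRing C_NormedModule F G z a b HF HG).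
Qed.

Lemma cderiv_mult (F G : C -> C) (z a b : C) : cderiv F z a -> cderiv G z b -> cderiv (fun u => F u * G u)%C z (a * G z + F z * b)%C.
Proof.
  intros HF HG.
  apply cderiv_is_derive' in HF; apply cderiv_is_derive' in HG.
  apply is_derive_cderiv'.
  exact (@is_derive_mult C_AbsRing F G z a b HF HG Cmult_comm).
Qed.

Lemma cderiv_const (k z : C) : cderiv (fun _ => k) z 0%C.
Proof. apply is_derive_cderiv. exact (@is_derive_const C_AbsRing C_NormedModule k z). Qed.

Lemma cderiv_id (z : C) : cderiv (fun u => u) z 1%C.
Proof. apply is_derive_cderiv'. exact (@is_derive_id C_AbsRing z). Qed.

Lemma cderiv_comp (F G : C -> C) (z a b : C) : cderiv G z a -> cderiv F (G z) b -> cderiv (fun u => F (G u)) z (b * a)%C.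
Proof.
  intros HG HF. apply is_derive_cderiv.
  apply cderiv_is_derive in HF; apply cderiv_is_derive' in HG.
  pose proof (@is_derive_comp C_AbsRing C_NormedModule F G z b a HF HG) as H.
  replace (b * a)%C with (scal a b). exact H.
  change (a * b = b * a)%C. apply Cmult_comm.
Qed.



Lemma cderiv_eq (F : C -> C) (z a b : C) : a = b -> cderiv F z a -> cderiv F z b.
Proof. intros ->; auto. Qed.

Lemma cderiv_scal (k : C) (F : C -> C) (z a : C) : cderiv F z a -> cderiv (fun u => k * F u)%C z (k * a)%C.
Proof.
  intros H. eapply cderiv_eq; [| apply (cderiv_mult _ _ z 0 a (cderiv_const k z) H)].
  ring.
Qed.

Lemma cderiv_inv_id (z : C) : z <> 0%C -> cderiv (fun u => / u)%C z (- / (z * z))%C.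
Proof.
  intros Hz eps Heps.
  assert (Hm : 0 < Cmod z) by (apply Cmod_gt_0; auto).
  exists (Rmin (Cmod z / 2) (eps * Cmod z * Cmod z * Cmod z / 2)). split.
  { apply Rmin_pos; [lra|]. apply Rdiv_lt_0_compat; [|lra]. repeat apply Rmult_lt_0_compat; nra. }
  intros h Hh.
  pose proof (Rmin_l (Cmod z / 2) (eps * Cmod z * Cmod z * Cmod z / 2)) as H1.
  pose proof (Rmin_r (Cmod z / 2) (eps * Cmod z * Cmod z * Cmod z / 2)) as H2.
  assert (Hzh : Cmod (z + h)%C >= Cmod z / 2).
  { pose proof (Cmod_triangle (z + h) (- h))%C as T.
    replace (z + h + - h)%C with z in T by ring. rewrite Cmod_opp in T. lra. }
  assert (Hzh0 : (z + h)%C <> 0%C).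
  { intros E. rewrite E, Cmod_0 in Hzh. lra. }
  replace (/ (z + h) - / z - - / (z * z) * h)%C with (h * h / (z * z * (z + h)))%C
    by (field; auto).
  unfold Cdiv. rewrite !Cmod_mult, Cmod_inv by (repeat apply Cmult_neq_0; auto).
  rewrite !Cmod_mult.
  pose proof (Cmod_ge_0 h).
  assert (Hpos : 0 < Cmod z * Cmod z * Cmod (z + h)%C) by (apply Rmult_lt_0_compat; nra).
  apply Rmult_le_reg_r with (Cmod z * Cmod z * Cmod (z + h)%C); auto.
  rewrite Rmult_assoc, Rinv_l by lra. rewrite Rmult_1_r.
  assert (Cmod h <= eps * Cmod z * Cmod z * Cmod z / 2) by lra.
  assert (Hc : Cmod z * Cmod z * Cmod z / 2 <= Cmod z * Cmod z * Cmod (z + h)%C).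
  { assert (0 <= Cmod z * Cmod z) by nra. nra. }
  assert (Cmod h * Cmod h <= Cmod h * (eps * Cmod z * Cmod z * Cmod z / 2))
    by (apply Rmult_le_compat_l; auto).
  assert (Cmod h * (eps * Cmod z * Cmod z * Cmod z / 2) <= eps * Cmod h * (Cmod z * Cmod z * Cmod (z + h)%C)).
  { assert (0 <= eps * Cmod h) by nra.
    pose proof (Rmult_le_compat_l _ _ _ H4 Hc). nra. }
  lra.
Qed.

Lemma cderiv_inv (F : C -> C) (z a : C) : F z <> 0%C -> cderiv F z a -> cderiv (fun u => / F u)%C z (- a / (F z * F z))%C.
Proof.
  intros Hz H. eapply cderiv_eq; [| apply (cderiv_comp (fun u => / u)%C F z a _ H (cderiv_inv_id _ Hz))].
  field; auto.
Qed.

Lemma cderiv_div (F G : C -> C) (z a b : C) : G z <> 0%C -> cderiv F z a -> cderiv G z b ->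
  cderiv (fun u => F u / G u)%C z ((a * G z - F z * b) / (G z * G z))%C.
Proof.
  intros Hz HF HG.
  eapply cderiv_eq; [| apply (cderiv_mult _ _ z _ _ HF (cderiv_inv G z b Hz HG))].
  field; auto.
Qed.

Lemma cderiv_pow (F : C -> C) (z a : C) (n : nat) : cderiv F z a -> cderiv (fun u => Cpow (F u) n) z (INR n * Cpow (F z) (pred n) * a)%C.
Proof.
  intros H. induction n as [|n IH].
  - simpl. eapply cderiv_eq; [|apply cderiv_const]. simpl. ring.
  - simpl. eapply cderiv_eq; [| apply (cderiv_mult _ _ z _ _ H IH)].
    destruct n as [|n].
    + simpl. ring.
    + rewrite S_INR. cbn [Init.Nat.pred]. rewrite RtoC_plus.
      change (Cpow (F z) (S n)) with (F z * Cpow (F z) n)%C.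
      rewrite !RtoC_plus. ring.
Qed.

Lemma pderiv_comp (F : C -> C) (g : R -> C) t v l :
  pderiv g t v -> cderiv F (g t) l -> pderiv (fun s => F (g s)) t (l * v)%C.
Proof.
  intros Hg HF eps Heps.
  set (M := Cmod v + 1).
  assert (HM : 0 < M) by (unfold M; pose proof (Cmod_ge_0 v); lra).
  set (L := Cmod l + 1).
  assert (HL : 0 < L) by (unfold L; pose proof (Cmod_ge_0 l); lra).
  destruct (HF (eps / (2 * M)) ltac:(apply Rdiv_lt_0_compat; lra)) as [d1 [Hd1 HF']].
  destruct (Hg 1 Rlt_0_1) as [d2 [Hd2 Hg1]].
  destruct (Hg (eps / (2 * L)) ltac:(apply Rdiv_lt_0_compat; lra)) as [d3 [Hd3 Hg3]].
  exists (Rmin (Rmin d2 d3) (d1 / M)). split.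
  { repeat apply Rmin_pos; auto. apply Rdiv_lt_0_compat; lra. }
  intros h Hh.
  pose proof (Rmin_l (Rmin d2 d3) (d1 / M)). pose proof (Rmin_r (Rmin d2 d3) (d1 / M)).
  pose proof (Rmin_l d2 d3). pose proof (Rmin_r d2 d3).
  set (k := (g (t + h)%R - g t)%C).
  assert (Hk : Cmod k <= M * Rabs h).
  { specialize (Hg1 h ltac:(lra)).
    pose proof (Cmod_triangle (g (t + h)%R - g t - RtoC h * v) (RtoC h * v))%C as T.
    replace (g (t + h)%R - g t - RtoC h * v + RtoC h * v)%C with k in T by (unfold k; ring).
    rewrite Cmod_mult, Cmod_R in T. unfold M. pose proof (Rabs_pos h). nra. }
  assert (Hk2 : Cmod k < d1).
  { pose proof (Rabs_pos h).
    assert (M * Rabs h < M * (d1 / M)) by (apply Rmult_lt_compat_l; lra).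
    replace (M * (d1 / M)) with d1 in H4 by (field; lra). lra. }
  specialize (HF' k Hk2).
  replace (g t + k)%C with (g (t + h)%R) in HF' by (unfold k; ring).
  specialize (Hg3 h ltac:(lra)).
  replace (F (g (t + h)%R) - F (g t) - RtoC h * (l * v))%C with
    ((F (g (t + h)%R) - F (g t) - l * k) + l * (g (t + h)%R - g t - RtoC h * v))%C
    by (unfold k; ring).
  eapply Rle_trans; [apply Cmod_triangle|].
  rewrite Cmod_mult.
  assert (A1 : eps / (2 * M) * Cmod k <= eps / 2 * Rabs h).
  { apply Rle_trans with (eps / (2 * M) * (M * Rabs h)).
    apply Rmult_le_compat_l; auto. apply Rlt_le, Rdiv_lt_0_compat; lra.
    right; field; lra. }
  assert (A2 : Cmod l * (eps / (2 * L) * Rabs h) <= eps / 2 * Rabs h).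
  { apply Rle_trans with (L * (eps / (2 * L) * Rabs h)).
    apply Rmult_le_compat_r. apply Rmult_le_pos. apply Rlt_le, Rdiv_lt_0_compat; lra. apply Rabs_pos.
    unfold L; lra. right; field; lra. }
  pose proof (Cmod_ge_0 l).
  assert (Cmod l * Cmod (g (t + h)%R - g t - RtoC h * v)%C <= Cmod l * (eps / (2 * L) * Rabs h))
    by (apply Rmult_le_compat_l; auto).
  lra.
Qed.

Lemma pderiv_affine (z v : C) t : pderiv (fun s => z + RtoC s * v)%C t v.
Proof.
  intros eps Heps. exists 1. split; [lra|]. intros h Hh.
  replace (z + RtoC (t + h)%R * v - (z + RtoC t * v) - RtoC h * v)%C with (RtoC 0)
    by (rewrite RtoC_plus; ring).
  rewrite Cmod_0. pose proof (Rabs_pos h). nra.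
Qed.

Lemma pderiv_components (g : R -> C) t v :
  is_derive (fun s => fst (g s)) t (fst v) -> is_derive (fun s => snd (g s)) t (snd v) ->
  pderiv g t v.
Proof.
  intros H1 H2 eps Heps.
  apply is_derive_Reals in H1. apply is_derive_Reals in H2.
  destruct (H1 (eps/2) ltac:(lra)) as [d1 Hd1].
  destruct (H2 (eps/2) ltac:(lra)) as [d2 Hd2].
  exists (Rmin d1 d2). split. apply Rmin_pos; apply cond_pos.
  intros h Hh.
  destruct (Req_dec h 0) as [->|Hh0].
  { rewrite Rplus_0_r. replace (g t - g t - RtoC 0 * v)%C with (RtoC 0) by ring.
    rewrite Cmod_0, Rabs_R0. lra. }
  pose proof (Rmin_l d1 d2). pose proof (Rmin_r d1 d2).
  specialize (Hd1 h Hh0 ltac:(lra)). specialize (Hd2 h Hh0 ltac:(lra)).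
  eapply Rle_trans; [apply Cmod_le_re_im|].
  pose proof (Rabs_pos_lt h Hh0).
  assert (E1 : fst (g (t + h)%R - g t - RtoC h * v)%C = h * ((fst (g (t + h)) - fst (g t)) / h - fst v))
    by (simpl; field; auto).
  assert (E2 : snd (g (t + h)%R - g t - RtoC h * v)%C = h * ((snd (g (t + h)) - snd (g t)) / h - snd v))
    by (simpl; field; auto).
  rewrite E1, E2, !Rabs_mult.
  nra.
Qed.

Definition RI (f : R -> R) (a b : R) : R := RInt f a b.

Lemma RI_ext f g a b : (forall t, Rmin a b < t < Rmax a b -> f t = g t) -> RI f a b = RI g a b.
Proof. intros H. unfold RI. apply RInt_ext. auto. Qed.

Lemma RI_Chasles f a b c : ex_RInt f a b -> ex_RInt f b c -> RI f a b + RI f b c = RI f a c.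
Proof. intros H1 H2. unfold RI. exact (@RInt_Chasles R_CompleteNormedModule f a b c H1 H2). Qed.

Lemma RI_plus f g a b : ex_RInt f a b -> ex_RInt g a b -> RI (fun t => f t + g t) a b = RI f a b + RI g a b.
Proof. intros H1 H2. unfold RI. exact (@RInt_plus R_CompleteNormedModule f g a b H1 H2). Qed.

Lemma RI_scal f a b p : ex_RInt f a b -> RI (fun t => p * f t) a b = p * RI f a b.
Proof. intros H1. unfold RI. exact (@RInt_scal R_CompleteNormedModule f a b p H1). Qed.

Lemma RI_swap f a b : ex_RInt f a b -> RI f b a = - RI f a b.
Proof. intros H1. unfold RI. rewrite <- (@opp_RInt_swap R_CompleteNormedModule f a b H1). reflexivity. Qed.

Lemma RI_point f a : RI f a a = 0.
Proof. unfold RI. exact (@RInt_point R_CompleteNormedModule a f). Qed.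

Lemma RI_const c a b : RI (fun _ => c) a b = (b - a) * c.
Proof. unfold RI. exact (@RInt_const R_CompleteNormedModule a b c). Qed.

Lemma RI_lin2 (u v : R -> R) (p q : R) a b : ex_RInt u a b -> ex_RInt v a b ->
  RI (fun t => p * u t + q * v t) a b = p * RI u a b + q * RI v a b.
Proof.
  intros Hu Hv.
  rewrite (RI_plus (fun t => p * u t) (fun t => q * v t)).
  - rewrite RI_scal, RI_scal; auto.
  - apply (@ex_RInt_scal R_NormedModule u a b p Hu).
  - apply (@ex_RInt_scal R_NormedModule v a b q Hv).
Qed.

Lemma RI_derive (F f : R -> R) a b :
  (forall t, Rmin a b <= t <= Rmax a b -> is_derive F t (f t)) ->
  (forall t, Rmin a b <= t <= Rmax a b -> continuous f t) ->
  RI f a b = F b - F a.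
Proof.
  intros H1 H2. unfold RI. apply is_RInt_unique.
  exact (@is_RInt_derive R_CompleteNormedModule F f a b H1 H2).
Qed.

Definition CInt (f : R -> C) (a b : R) : C :=
  (RI (fun t => fst (f t)) a b, RI (fun t => snd (f t)) a b).

Definition cex (f : R -> C) (a b : R) : Prop :=
  ex_RInt (fun t => fst (f t)) a b /\ ex_RInt (fun t => snd (f t)) a b.

Definition pcontI (f : R -> C) (a b : R) : Prop :=
  forall t, Rmin a b <= t <= Rmax a b -> pcont f t.

Lemma cex_cont f a b : pcontI f a b -> cex f a b.
Proof.
  intros H. split; apply (@ex_RInt_continuous R_CompleteNormedModule); intros t Ht.
  - apply pcont_fst; auto.
  - apply pcont_snd; auto.
Qed.

Lemma CInt_Chasles f a b c : cex f a b -> cex f b c -> (CInt f a b + CInt f b c)%C = CInt f a c.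
Proof.
  intros [H1 H2] [H3 H4]. unfold CInt, Cplus; simpl.
  f_equal; apply RI_Chasles; auto.
Qed.

Lemma CInt_plus f g a b : cex f a b -> cex g a b -> CInt (fun t => f t + g t)%C a b = (CInt f a b + CInt g a b)%C.
Proof.
  intros [H1 H2] [H3 H4]. unfold CInt, Cplus; simpl.
  f_equal; apply (RI_plus (fun t => _ (f t)) (fun t => _ (g t))); auto.
Qed.

Lemma CInt_cmul (k : C) f a b : cex f a b -> CInt (fun t => k * f t)%C a b = (k * CInt f a b)%C.
Proof.
  intros [H1 H2]. unfold CInt, Cmult; simpl. f_equal.
  - transitivity (fst k * RI (fun t => fst (f t)) a b + - snd k * RI (fun t => snd (f t)) a b); [|ring].
    rewrite <- (RI_lin2 (fun t => fst (f t)) (fun t => snd (f t)) (fst k) (- snd k)) by auto.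
    apply RI_ext; intros; ring.
  - transitivity (fst k * RI (fun t => snd (f t)) a b + snd k * RI (fun t => fst (f t)) a b); [|ring].
    rewrite <- (RI_lin2 (fun t => snd (f t)) (fun t => fst (f t)) (fst k) (snd k)) by auto.
    apply RI_ext; intros; ring.
Qed.

Lemma cex_cmul (k : C) f a b : cex f a b -> cex (fun t => k * f t)%C a b.
Proof.
  intros [H1 H2]. split; simpl.
  - apply (ex_RInt_ext (fun t => plus (scal (fst k) (fst (f t))) (scal (- snd k) (snd (f t))))).
    + intros; unfold plus, scal; simpl. unfold mult; simpl. ring.
    + exact (@ex_RInt_plus R_NormedModule _ _ a b (@ex_RInt_scal R_NormedModule _ a b _ H1) (@ex_RInt_scal R_NormedModule _ a b _ H2)).
  - apply (ex_RInt_ext (fun t => plus (scal (fst k) (snd (f t))) (scal (snd k) (fst (f t))))).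
    + intros; unfold plus, scal; simpl. unfold mult; simpl. ring.
    + exact (@ex_RInt_plus R_NormedModule _ _ a b (@ex_RInt_scal R_NormedModule _ a b _ H2) (@ex_RInt_scal R_NormedModule _ a b _ H1)).
Qed.

Lemma CInt_ext f g a b : (forall t, Rmin a b < t < Rmax a b -> f t = g t) -> CInt f a b = CInt g a b.
Proof.
  intros H. unfold CInt. f_equal; apply RI_ext; intros t Ht; rewrite H; auto.
Qed.

Lemma CInt_minus f g a b : cex f a b -> cex g a b -> CInt (fun t => f t - g t)%C a b = (CInt f a b - CInt g a b)%C.
Proof.
  intros Hf Hg.
  rewrite (CInt_ext _ (fun t => f t + (RtoC (-1)) * g t)%C) by (intros; ring).
  rewrite CInt_plus by (auto; apply cex_cmul; auto).
  rewrite CInt_cmul by auto.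
  assert (E : RtoC (-1) = (- RtoC 1)%C) by (apply injective_projections; simpl; ring).
  rewrite E. ring.
Qed.

Lemma cex_plus f g a b : cex f a b -> cex g a b -> cex (fun t => f t + g t)%C a b.
Proof.
  intros [H1 H2] [H3 H4]. split; simpl.
  - exact (@ex_RInt_plus R_NormedModule (fun t => fst (f t)) (fun t => fst (g t)) a b H1 H3).
  - exact (@ex_RInt_plus R_NormedModule (fun t => snd (f t)) (fun t => snd (g t)) a b H2 H4).
Qed.

Lemma cex_minus f g a b : cex f a b -> cex g a b -> cex (fun t => f t - g t)%C a b.
Proof.
  intros [H1 H2] [H3 H4]. split; simpl.
  - exact (@ex_RInt_minus R_NormedModule (fun t => fst (f t)) (fun t => fst (g t)) a b H1 H3).
  - exact (@ex_RInt_minus R_NormedModule (fun t => snd (f t)) (fun t => snd (g t)) a b H2 H4).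
Qed.

Lemma cex_swap f a b : cex f a b -> cex f b a.
Proof. intros [H1 H2]; split; apply (@ex_RInt_swap R_NormedModule); auto. Qed.

Lemma cex_Chasles f a b c : cex f a b -> cex f b c -> cex f a c.
Proof. intros [H1 H2] [H3 H4]; split; eapply (@ex_RInt_Chasles R_NormedModule); eauto. Qed.

Lemma CInt_const (k : C) a b : CInt (fun _ => k) a b = (RtoC (b - a) * k)%C.
Proof.
  unfold CInt, Cmult; simpl. rewrite !RI_const. f_equal; ring.
Qed.

Lemma CInt_swap f a b : cex f a b -> CInt f b a = (- CInt f a b)%C.
Proof.
  intros [H1 H2]. unfold CInt, Copp; simpl. f_equal; apply RI_swap; auto.
Qed.

Lemma CInt_point f a : CInt f a a = RtoC 0.
Proof. unfold CInt. rewrite !RI_point. reflexivity. Qed.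

Lemma RI_abs_le f a b M : a <= b -> ex_RInt f a b -> (forall t, a <= t <= b -> Rabs (f t) <= M) ->
  Rabs (RI f a b) <= (b - a) * M.
Proof. intros; unfold RI; apply abs_RInt_le_const; auto. Qed.

Lemma CInt_bound f a b M : cex f a b ->
  (forall t, Rmin a b <= t <= Rmax a b -> Cmod (f t) <= M) ->
  Cmod (CInt f a b) <= 2 * Rabs (b - a) * M.
Proof.
  intros [H1 H2] HM.
  destruct (Rle_or_lt a b) as [Hab|Hab].
  - rewrite Rmin_left, Rmax_right in HM by lra.
    eapply Rle_trans; [apply Cmod_le_re_im|]. unfold CInt; simpl.
    assert (A1 : Rabs (RI (fun t => fst (f t)) a b) <= (b - a) * M).
    { apply RI_abs_le; auto. intros t Ht. eapply Rle_trans; [apply re_le_Cmod'|]. apply HM; auto. }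
    assert (A2 : Rabs (RI (fun t => snd (f t)) a b) <= (b - a) * M).
    { apply RI_abs_le; auto. intros t Ht. eapply Rle_trans; [apply im_le_Cmod'|]. apply HM; auto. }
    rewrite (Rabs_right (b - a)) by lra. nra.
  - rewrite Rmin_right, Rmax_left in HM by lra.
    rewrite (CInt_swap f b a) by (apply cex_swap; split; auto). rewrite Cmod_opp.
    eapply Rle_trans; [apply Cmod_le_re_im|]. unfold CInt; simpl.
    assert (A1 : Rabs (RI (fun t => fst (f t)) b a) <= (a - b) * M).
    { apply RI_abs_le; [lra| apply (@ex_RInt_swap R_NormedModule); auto|]. intros t Ht. eapply Rle_trans; [apply re_le_Cmod'|]. apply HM; auto. }
    assert (A2 : Rabs (RI (fun t => snd (f t)) b a) <= (a - b) * M).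
    { apply RI_abs_le; [lra| apply (@ex_RInt_swap R_NormedModule); auto|]. intros t Ht. eapply Rle_trans; [apply im_le_Cmod'|]. apply HM; auto. }
    rewrite (Rabs_left (b - a)) by lra. nra.
Qed.

Lemma CInt_FTC (F f : R -> C) a b :
  (forall t, Rmin a b <= t <= Rmax a b -> pderiv F t (f t)) ->
  pcontI f a b ->
  CInt f a b = (F b - F a)%C.
Proof.
  intros HD HC. unfold CInt, Cminus, Cplus, Copp; simpl.
  f_equal.
  - rewrite (RI_derive (fun t => fst (F t))). ring.
    + intros t Ht. apply pderiv_fst, HD; auto.
    + intros t Ht. apply pcont_fst, HC; auto.
  - rewrite (RI_derive (fun t => snd (F t))). ring.
    + intros t Ht. apply pderiv_snd, HD; auto.
    + intros t Ht. apply pcont_snd, HC; auto.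
Qed.

Definition Hs (g : C -> C) (y a b : R) : C := CInt (fun x => g (x, y)) a b.
Definition Vs (g : C -> C) (x c d : R) : C := CInt (fun y => g (x, y)) c d.
Definition Rect (g : C -> C) (a b c d : R) : C :=
  (Hs g c a b + Ci * Vs g b c d - Hs g d a b - Ci * Vs g a c d)%C.

Definition inI (x a b : R) : Prop := Rmin a b <= x <= Rmax a b.

Definition gcont_rect (g : C -> C) (a b c d : R) : Prop :=
  forall x y, inI x a b -> inI y c d -> ccont g (x, y).

Lemma inI_l a b m x : inI m a b -> inI x a m -> inI x a b.
Proof. unfold inI, Rmin, Rmax; repeat destruct Rle_dec; lra. Qed.
Lemma inI_r a b m x : inI m a b -> inI x m b -> inI x a b.
Proof. unfold inI, Rmin, Rmax; repeat destruct Rle_dec; lra. Qed.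
Lemma inI_a a b : inI a a b.
Proof. unfold inI, Rmin, Rmax; repeat destruct Rle_dec; lra. Qed.
Lemma inI_b a b : inI b a b.
Proof. unfold inI, Rmin, Rmax; repeat destruct Rle_dec; lra. Qed.
Lemma inI_sym a b x : inI x a b -> inI x b a.
Proof. unfold inI, Rmin, Rmax; repeat destruct Rle_dec; lra. Qed.

Lemma Cmod_pair_le (a b : R) : Cmod (a, b) <= Rabs a + Rabs b.
Proof. apply (Cmod_le_re_im (a, b)). Qed.

Lemma pcont_hor (y t : R) : pcont (fun s => (s, y) : C) t.
Proof.
  intros eps He. exists eps; split; auto. intros s Hs.
  eapply Rle_lt_trans; [apply Cmod_le_re_im|]. simpl.
  replace (y + - y) with 0 by ring. rewrite Rabs_R0.
  replace (s + - t) with (s - t) by ring. lra.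
Qed.

Lemma pcont_ver (x t : R) : pcont (fun s => (x, s) : C) t.
Proof.
  intros eps He. exists eps; split; auto. intros s Hs.
  eapply Rle_lt_trans; [apply Cmod_le_re_im|]. simpl.
  replace (x + - x) with 0 by ring. rewrite Rabs_R0.
  replace (s + - t) with (s - t) by ring. lra.
Qed.

Lemma cex_hor g a b c d y : gcont_rect g a b c d -> inI y c d -> cex (fun x => g (x, y)) a b.
Proof.
  intros H Hy. apply cex_cont. intros t Ht.
  apply (pcont_comp g (fun s => (s, y) : C)). apply pcont_hor. apply H; auto.
Qed.

Lemma cex_ver g a b c d x : gcont_rect g a b c d -> inI x a b -> cex (fun y => g (x, y)) c d.
Proof.
  intros H Hx. apply cex_cont. intros t Ht.
  apply (pcont_comp g (fun s => (x, s) : C)). apply pcont_ver. apply H; auto.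
Qed.

Lemma gcont_rect_subx g a b c d m : gcont_rect g a b c d -> inI m a b ->
  gcont_rect g a m c d /\ gcont_rect g m b c d.
Proof.
  intros H Hm. split; intros x y Hx Hy; apply H; auto.
  eapply inI_l; eauto. eapply inI_r; eauto.
Qed.

Lemma gcont_rect_suby g a b c d m : gcont_rect g a b c d -> inI m c d ->
  gcont_rect g a b c m /\ gcont_rect g a b m d.
Proof.
  intros H Hm. split; intros x y Hx Hy; apply H; auto.
  eapply inI_l; eauto. eapply inI_r; eauto.
Qed.

Lemma Rect_splitx g a b c d m : gcont_rect g a b c d -> inI m a b ->
  Rect g a b c d = (Rect g a m c d + Rect g m b c d)%C.
Proof.
  intros H Hm. destruct (gcont_rect_subx _ _ _ _ _ _ H Hm) as [H1 H2].
  unfold Rect, Hs.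
  rewrite <- (CInt_Chasles (fun x => g (x, c)) a m b).
  rewrite <- (CInt_Chasles (fun x => g (x, d)) a m b).
  ring.
  all: first [apply (cex_hor g a m c d c); auto; apply inI_a | apply (cex_hor g m b c d c); auto; apply inI_a
             | apply (cex_hor g a m c d d); auto; apply inI_b | apply (cex_hor g m b c d d); auto; apply inI_b].
Qed.

Lemma Rect_splity g a b c d m : gcont_rect g a b c d -> inI m c d ->
  Rect g a b c d = (Rect g a b c m + Rect g a b m d)%C.
Proof.
  intros H Hm. destruct (gcont_rect_suby _ _ _ _ _ _ H Hm) as [H1 H2].
  unfold Rect, Vs.
  rewrite <- (CInt_Chasles (fun y => g (b, y)) c m d).
  rewrite <- (CInt_Chasles (fun y => g (a, y)) c m d).
  ring.
  all: first [apply (cex_ver g a b c m a); auto; apply inI_a | apply (cex_ver g a b m d a); auto; apply inI_a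
             | apply (cex_ver g a b c m b); auto; apply inI_b | apply (cex_ver g a b m d b); auto; apply inI_b].
Qed.

Lemma Rect_degx g a c d : Rect g a a c d = RtoC 0.
Proof. unfold Rect, Hs. rewrite !CInt_point. ring. Qed.

Lemma Rect_degy g a b c : Rect g a b c c = RtoC 0.
Proof. unfold Rect, Vs. rewrite !CInt_point. ring. Qed.

Lemma Cmod4 (p q r s : C) : Cmod (p + q - r - s)%C <= Cmod p + Cmod q + Cmod r + Cmod s.
Proof.
  unfold Cminus.
  eapply Rle_trans; [apply Cmod_triangle|]. rewrite Cmod_opp.
  eapply Rplus_le_compat_r.
  eapply Rle_trans; [apply Cmod_triangle|]. rewrite Cmod_opp.
  eapply Rplus_le_compat_r.
  apply Cmod_triangle.
Qed.

Lemma Rect_bound g a b c d M : gcont_rect g a b c d ->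
  (forall x y, inI x a b -> inI y c d -> Cmod (g (x, y)) <= M) ->
  Cmod (Rect g a b c d) <= 4 * (Rabs (b - a) + Rabs (d - c)) * M.
Proof.
  intros H HM. unfold Rect.
  assert (M0 : 0 <= M).
  { eapply Rle_trans; [apply Cmod_ge_0| apply (HM a c); apply inI_a]. }
  assert (B1 : Cmod (Hs g c a b) <= 2 * Rabs (b - a) * M).
  { apply CInt_bound. apply (cex_hor _ _ _ c d); auto; apply inI_a. intros t Ht; apply HM; auto; apply inI_a. }
  assert (B2 : Cmod (Hs g d a b) <= 2 * Rabs (b - a) * M).
  { apply CInt_bound. apply (cex_hor _ _ _ c d); auto; apply inI_b. intros t Ht; apply HM; auto; apply inI_b. }
  assert (B3 : Cmod (Vs g a c d) <= 2 * Rabs (d - c) * M).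
  { apply CInt_bound. apply (cex_ver _ a b); auto; apply inI_a. intros t Ht; apply HM; auto; apply inI_a. }
  assert (B4 : Cmod (Vs g b c d) <= 2 * Rabs (d - c) * M).
  { apply CInt_bound. apply (cex_ver _ a b); auto; apply inI_b. intros t Ht; apply HM; auto; apply inI_b. }
  eapply Rle_trans; [apply Cmod4|].
  rewrite !Cmod_mult, Cmod_Ci.
  nra.
Qed.

Lemma Rect_minus g h a b c d : gcont_rect g a b c d -> gcont_rect h a b c d ->
  Rect (fun z => g z - h z)%C a b c d = (Rect g a b c d - Rect h a b c d)%C.
Proof.
  intros Hg Hh. unfold Rect, Hs, Vs.
  pose proof (cex_hor g a b c d c Hg (inI_a _ _)).
  pose proof (cex_hor g a b c d d Hg (inI_b _ _)).
  pose proof (cex_ver g a b c d a Hg (inI_a _ _)).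
  pose proof (cex_ver g a b c d b Hg (inI_b _ _)).
  pose proof (cex_hor h a b c d c Hh (inI_a _ _)).
  pose proof (cex_hor h a b c d d Hh (inI_b _ _)).
  pose proof (cex_ver h a b c d a Hh (inI_a _ _)).
  pose proof (cex_ver h a b c d b Hh (inI_b _ _)).
  rewrite !CInt_minus by assumption.
  ring.
Qed.

Lemma pderiv_ext (g1 g2 : R -> C) t v : (forall s, g1 s = g2 s) -> pderiv g1 t v -> pderiv g2 t v.
Proof. intros E H eps He. destruct (H eps He) as [d [Hd H']]. exists d; split; auto.
  intros h Hh. rewrite <- !E. auto. Qed.

Lemma pderiv_eq g t v w : v = w -> pderiv g t v -> pderiv g t w.
Proof. intros ->; auto. Qed.

Lemma pcont_mulc (f : R -> C) (k : C) t : pcont f t -> pcont (fun s => f s * k)%C t.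
Proof.
  intros H eps He.
  destruct (H (eps / (Cmod k + 1))) as [d [Hd H']].
  { apply Rdiv_lt_0_compat; auto. pose proof (Cmod_ge_0 k); lra. }
  exists d; split; auto. intros s Hs.
  replace (f s * k - f t * k)%C with ((f s - f t) * k)%C by ring.
  rewrite Cmod_mult. specialize (H' s Hs).
  pose proof (Cmod_ge_0 k). pose proof (Cmod_ge_0 (f s - f t)%C).
  assert (HH : Cmod (f s - f t)%C * (Cmod k + 1) < eps / (Cmod k + 1) * (Cmod k + 1))
    by (apply Rmult_lt_compat_r; lra).
  replace (eps / (Cmod k + 1) * (Cmod k + 1)) with eps in HH by (field; lra). nra.
Qed.

Lemma pcontI_hor g a b c d y : gcont_rect g a b c d -> inI y c d -> pcontI (fun x => g (x, y)) a b.
Proof.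
  intros H Hy t Ht.
  apply (pcont_comp g (fun s => (s, y) : C)). apply pcont_hor. apply H; auto.
Qed.

Lemma pcontI_ver g a b c d x : gcont_rect g a b c d -> inI x a b -> pcontI (fun y => g (x, y)) c d.
Proof.
  intros H Hx t Ht.
  apply (pcont_comp g (fun s => (x, s) : C)). apply pcont_ver. apply H; auto.
Qed.

Lemma path_h (y s : R) : ((0, y) + RtoC s * 1)%C = (s, y) :> C.
Proof. apply injective_projections; simpl; ring. Qed.

Lemma path_v (x s : R) : ((x, 0) + RtoC s * Ci)%C = (x, s) :> C.
Proof. apply injective_projections; simpl; ring. Qed.

Lemma Rect_primitive g F a b c d : gcont_rect g a b c d ->
  (forall x y, inI x a b -> inI y c d -> cderiv F (x, y) (g (x, y))) ->
  Rect g a b c d = RtoC 0.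
Proof.
  intros Hg HF.
  assert (EH : forall y, inI y c d -> Hs g y a b = (F (b, y) - F (a, y))%C).
  { intros y Hy. unfold Hs.
    apply (CInt_FTC (fun s => F (s, y))).
    - intros t Ht.
      apply (pderiv_ext (fun s => F ((0, y) + RtoC s * 1)%C)).
      { intros s; rewrite path_h; auto. }
      apply (pderiv_eq _ _ (g (t, y) * 1)%C). ring.
      apply pderiv_comp. apply pderiv_affine. rewrite path_h. apply HF; auto.
    - eapply pcontI_hor; eauto. }
  assert (EV : forall x, inI x a b -> (Ci * Vs g x c d)%C = (F (x, d) - F (x, c))%C).
  { intros x Hx. unfold Vs.
    rewrite <- CInt_cmul by (apply cex_cont; eapply pcontI_ver; eauto).
    rewrite (CInt_ext _ (fun s => g (x, s) * Ci)%C) by (intros; ring).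
    apply (CInt_FTC (fun s => F (x, s))).
    - intros t Ht.
      apply (pderiv_ext (fun s => F ((x, 0) + RtoC s * Ci)%C)).
      { intros s; rewrite path_v; auto. }
      apply pderiv_comp. apply pderiv_affine. rewrite path_v. apply HF; auto.
    - intros t Ht. apply pcont_mulc. eapply pcontI_ver; eauto. }
  unfold Rect.
  replace (Hs g c a b + Ci * Vs g b c d - Hs g d a b - Ci * Vs g a c d)%C with
    (Hs g c a b + (Ci * Vs g b c d) - Hs g d a b - (Ci * Vs g a c d))%C by ring.
  rewrite EH, EH, EV, EV; try apply inI_a; try apply inI_b.
  ring.
Qed.

Lemma gcont_of_cderiv g a b c d : (forall x y, inI x a b -> inI y c d -> exists l, cderiv g (x, y) l) ->
  gcont_rect g a b c d.
Proof. intros H x y Hx Hy. destruct (H x y Hx Hy) as [l Hl]. eapply cderiv_ccont; eauto. Qed.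

Lemma Rect_affine (z0 al be : C) a b c d : Rect (fun z => al + be * (z - z0))%C a b c d = RtoC 0.
Proof.
  assert (HD : forall z, cderiv (fun z => al * z + RtoC (/2) * be * ((z - z0) * (z - z0)))%C z (al + be * (z - z0))%C).
  { intros z.
    pose proof (cderiv_scal al _ z _ (cderiv_id z)) as H1.
    pose proof (cderiv_minus _ _ z _ _ (cderiv_id z) (cderiv_const z0 z)) as H2.
    pose proof (cderiv_mult _ _ z _ _ H2 H2) as H3.
    pose proof (cderiv_scal (RtoC (/2) * be) _ z _ H3) as H4.
    pose proof (cderiv_plus _ _ z _ _ H1 H4) as H5.
    eapply cderiv_eq; [|exact H5].
    apply injective_projections; simpl; field. }
  apply (Rect_primitive _ (fun z => al * z + RtoC (/2) * be * ((z - z0) * (z - z0)))%C).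
  - apply gcont_of_cderiv. intros x y _ _. exists be.
    pose proof (cderiv_minus _ _ (x, y) _ _ (cderiv_id (x, y)) (cderiv_const z0 (x, y))) as H2.
    pose proof (cderiv_scal be _ _ _ H2) as H3.
    pose proof (cderiv_plus _ _ _ _ _ (cderiv_const al (x, y)) H3) as H4.
    eapply cderiv_eq; [|exact H4]. ring.
  - intros x y _ _. apply HD.
Qed.

Record rect := mkR { ra : R; rb : R; rc : R; rd : R }.

Definition RectR g r := Rect g (ra r) (rb r) (rc r) (rd r).

Definition quad (g : C -> C) (r : rect) : rect :=
  let m := (ra r + rb r) / 2 in
  let n := (rc r + rd r) / 2 in
  let q1 := mkR (ra r) m (rc r) n in
  let q2 := mkR m (rb r) (rc r) n in
  let q3 := mkR (ra r) m n (rd r) in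
  let q4 := mkR m (rb r) n (rd r) in
  if Rle_dec (Cmod (RectR g r) / 4) (Cmod (RectR g q1)) then q1 else
  if Rle_dec (Cmod (RectR g r) / 4) (Cmod (RectR g q2)) then q2 else
  if Rle_dec (Cmod (RectR g r) / 4) (Cmod (RectR g q3)) then q3 else q4.

Fixpoint rseq g r0 n : rect := match n with O => r0 | S n => quad g (rseq g r0 n) end.

Definition wf r := ra r <= rb r /\ rc r <= rd r.
Definition Sub r' r := ra r <= ra r' /\ rb r' <= rb r /\ rc r <= rc r' /\ rd r' <= rd r.
Definition holo_on g r := forall x y, ra r <= x <= rb r -> rc r <= y <= rd r -> exists l, cderiv g (x, y) l.

Lemma inI_ord x a b : a <= b -> (inI x a b <-> a <= x <= b).
Proof. intros H. unfold inI. rewrite Rmin_left, Rmax_right by lra. tauto. Qed.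

Lemma holo_gcont g r : wf r -> holo_on g r -> gcont_rect g (ra r) (rb r) (rc r) (rd r).
Proof.
  intros [H1 H2] H. apply gcont_of_cderiv. intros x y Hx Hy.
  apply H. apply (inI_ord x _ _ H1); auto. apply (inI_ord y _ _ H2); auto.
Qed.

Lemma holo_sub g r r' : Sub r' r -> holo_on g r -> holo_on g r'.
Proof. intros [S1 [S2 [S3 S4]]] H x y Hx Hy. apply H; lra. Qed.

Lemma Cmod_sum4 (p q r s : C) : Cmod (p + q + (r + s))%C <= Cmod p + Cmod q + Cmod r + Cmod s.
Proof.
  eapply Rle_trans; [apply Cmod_triangle|].
  pose proof (Cmod_triangle p q). pose proof (Cmod_triangle r s). lra.
Qed.

Lemma quad_spec g r : wf r -> holo_on g r ->
  wf (quad g r) /\ Sub (quad g r) r /\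
  rb (quad g r) - ra (quad g r) = (rb r - ra r) / 2 /\
  rd (quad g r) - rc (quad g r) = (rd r - rc r) / 2 /\
  Cmod (RectR g r) / 4 <= Cmod (RectR g (quad g r)).
Proof.
  intros Hw Hh. pose proof (holo_gcont _ _ Hw Hh) as Hc. destruct Hw as [W1 W2].
  set (m := (ra r + rb r) / 2). set (n := (rc r + rd r) / 2).
  assert (Hm : inI m (ra r) (rb r)) by (apply inI_ord; unfold m; lra).
  assert (Hn : inI n (rc r) (rd r)) by (apply inI_ord; unfold n; lra).
  assert (Esplit : RectR g r = (Rect g (ra r) m (rc r) n + Rect g m (rb r) (rc r) n +
                                (Rect g (ra r) m n (rd r) + Rect g m (rb r) n (rd r)))%C).
  { unfold RectR. rewrite (Rect_splitx _ _ _ _ _ m) by auto.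
    destruct (gcont_rect_subx _ _ _ _ _ _ Hc Hm) as [Hc1 Hc2].
    rewrite (Rect_splity _ (ra r) m _ _ n) by auto.
    rewrite (Rect_splity _ m (rb r) _ _ n) by auto.
    ring. }
  unfold quad. fold m n.
  destruct (Rle_dec (Cmod (RectR g r) / 4) (Cmod (RectR g (mkR (ra r) m (rc r) n)))) as [D1|D1].
  { unfold wf, Sub; simpl. unfold m, n in *. repeat split; try lra; auto. }
  destruct (Rle_dec (Cmod (RectR g r) / 4) (Cmod (RectR g (mkR m (rb r) (rc r) n)))) as [D2|D2].
  { unfold wf, Sub; simpl. unfold m, n in *. repeat split; try lra; auto. }
  destruct (Rle_dec (Cmod (RectR g r) / 4) (Cmod (RectR g (mkR (ra r) m n (rd r))))) as [D3|D3].
  { unfold wf, Sub; simpl. unfold m, n in *. repeat split; try lra; auto. }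
  unfold wf, Sub; simpl. repeat split; try (unfold m, n; lra).
  unfold RectR in D1, D2, D3 |- *; simpl in D1, D2, D3 |- *.
  pose proof (Cmod_sum4 (Rect g (ra r) m (rc r) n) (Rect g m (rb r) (rc r) n)
                        (Rect g (ra r) m n (rd r)) (Rect g m (rb r) n (rd r))) as T.
  rewrite <- Esplit in T. unfold RectR in T. lra.
Qed.

Lemma Sub_refl r : Sub r r.
Proof. unfold Sub; lra. Qed.

Lemma Sub_trans r1 r2 r3 : Sub r1 r2 -> Sub r2 r3 -> Sub r1 r3.
Proof. unfold Sub; lra. Qed.

Section Goursat.
Variable g : C -> C.
Variable r0 : rect.
Hypothesis Hw0 : wf r0.
Hypothesis Hh0 : holo_on g r0.

Lemma rseq_spec n :
  wf (rseq g r0 n) /\ Sub (rseq g r0 n) r0 /\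
  rb (rseq g r0 n) - ra (rseq g r0 n) = (rb r0 - ra r0) * (/2) ^ n /\
  rd (rseq g r0 n) - rc (rseq g r0 n) = (rd r0 - rc r0) * (/2) ^ n /\
  Cmod (RectR g r0) * (/4) ^ n <= Cmod (RectR g (rseq g r0 n)).
Proof.
  induction n as [|n IH].
  - simpl. split; [apply Hw0|split; [apply Sub_refl|split; [ring|split; [ring|lra]]]].
  - destruct IH as [W [S [E1 [E2 B]]]].
    destruct (quad_spec g (rseq g r0 n) W (holo_sub _ _ _ S Hh0)) as [W' [S' [E1' [E2' B']]]].
    simpl. split; [auto|split; [|split; [|split]]].
    + eapply Sub_trans; eauto.
    + rewrite E1', E1. field.
    + rewrite E2', E2. field.
    + assert (0 <= (/4) ^ n) by (apply pow_le; lra). lra.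
Qed.

Lemma rseq_nested m k : Sub (rseq g r0 (m + k)) (rseq g r0 m).
Proof.
  induction k as [|k IH].
  - rewrite Nat.add_0_r. apply Sub_refl.
  - rewrite Nat.add_succ_r. simpl.
    destruct (rseq_spec (m + k)) as [W [S _]].
    destruct (quad_spec g _ W (holo_sub _ _ _ S Hh0)) as [_ [S' _]].
    eapply Sub_trans; eauto.
Qed.

Lemma rseq_cross m n : ra (rseq g r0 m) <= rb (rseq g r0 n) /\ rc (rseq g r0 m) <= rd (rseq g r0 n).
Proof.
  destruct (Nat.le_ge_cases m n) as [H|H].
  - destruct (Nat.le_exists_sub m n H) as [k [-> _]].
    rewrite Nat.add_comm. pose proof (rseq_nested m k) as [S1 [S2 [S3 S4]]].
    destruct (rseq_spec (m + k)) as [[W1 W2] _]. lra.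
  - destruct (Nat.le_exists_sub n m H) as [k [-> _]].
    rewrite Nat.add_comm. pose proof (rseq_nested n k) as [S1 [S2 [S3 S4]]].
    destruct (rseq_spec (n + k)) as [[W1 W2] _]. lra.
Qed.

Lemma limit_point : exists xs ys, forall n,
  ra (rseq g r0 n) <= xs <= rb (rseq g r0 n) /\ rc (rseq g r0 n) <= ys <= rd (rseq g r0 n).
Proof.
  destruct (completeness (fun x => exists n, x = ra (rseq g r0 n))) as [xs [Hub Hlub]].
  { exists (rb r0). intros x [n ->]. pose proof (rseq_cross n 0). simpl in H. lra. }
  { exists (ra r0). exists 0%nat. reflexivity. }
  destruct (completeness (fun y => exists n, y = rc (rseq g r0 n))) as [ys [Hub' Hlub']].
  { exists (rd r0). intros x [n ->]. pose proof (rseq_cross n 0). simpl in H. lra. }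
  { exists (rc r0). exists 0%nat. reflexivity. }
  exists xs, ys. intros n. split; split.
  - apply Hub. exists n; auto.
  - apply Hlub. intros x [m ->]. apply (rseq_cross m n).
  - apply Hub'. exists n; auto.
  - apply Hlub'. intros x [m ->]. apply (rseq_cross m n).
Qed.

Lemma goursat_main : RectR g r0 = RtoC 0.
Proof.
  destruct limit_point as [xs [ys Hlim]].
  set (w0 := rb r0 - ra r0). set (h0 := rd r0 - rc r0).
  assert (Hw : 0 <= w0) by (unfold w0; destruct Hw0; lra).
  assert (Hhh : 0 <= h0) by (unfold h0; destruct Hw0; lra).
  assert (Hin : ra r0 <= xs <= rb r0 /\ rc r0 <= ys <= rd r0) by (apply (Hlim 0%nat)).
  destruct (Hh0 xs ys ltac:(lra) ltac:(lra)) as [l Hl].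
  apply Cmod_eq_0.
  apply Rle_antisym; [|apply Cmod_ge_0].
  apply Rnot_lt_le. intros Hpos.
  set (K := 4 * (w0 + h0) * (w0 + h0) + 1).
  assert (HK : 0 < K) by (unfold K; nra).
  set (eps := Cmod (RectR g r0) / (2 * K)).
  assert (Heps : 0 < eps) by (unfold eps; apply Rdiv_lt_0_compat; lra).
  destruct (Hl eps Heps) as [delta [Hdelta Hd]].
  destruct (pow_lt_1_zero (/2) ltac:(rewrite Rabs_right; lra) (delta / (w0 + h0 + 1)))
    as [N HN].
  { apply Rdiv_lt_0_compat; lra. }
  specialize (HN N (Nat.le_refl N)).
  rewrite Rabs_right in HN by (apply Rle_ge, pow_le; lra).
  set (p := (/2) ^ N) in *.
  assert (Hp : 0 <= p) by (apply pow_le; lra).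
  destruct (rseq_spec N) as [WN [SN [EW [EH BN]]]].
  fold w0 h0 p in EW, EH.
  set (rN := rseq g r0 N) in *.
  assert (Hdiam : (w0 + h0) * p < delta).
  { assert ((w0 + h0) * p <= (w0 + h0 + 1) * p) by nra.
    assert ((w0 + h0 + 1) * p < (w0 + h0 + 1) * (delta / (w0 + h0 + 1))) by (apply Rmult_lt_compat_l; lra).
    replace ((w0 + h0 + 1) * (delta / (w0 + h0 + 1))) with delta in H0 by (field; lra). lra. }
  set (A := fun z => (g (xs, ys) + l * (z - (xs, ys)))%C).
  assert (HcN : gcont_rect g (ra rN) (rb rN) (rc rN) (rd rN)) by (apply holo_gcont; auto; eapply holo_sub; eauto).
  assert (HcA : gcont_rect A (ra rN) (rb rN) (rc rN) (rd rN)).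
  { apply gcont_of_cderiv. intros x y _ _. exists l.
    pose proof (cderiv_minus _ _ (x, y) _ _ (cderiv_id (x, y)) (cderiv_const (xs, ys) (x, y))) as H2.
    pose proof (cderiv_scal l _ _ _ H2) as H3.
    pose proof (cderiv_plus _ _ _ _ _ (cderiv_const (g (xs, ys)) (x, y)) H3) as H4.
    eapply cderiv_eq; [|exact H4]. ring. }
  assert (E : RectR g rN = Rect (fun z => g z - A z)%C (ra rN) (rb rN) (rc rN) (rd rN)).
  { rewrite Rect_minus by auto. unfold A. rewrite Rect_affine. unfold RectR. ring. }
  assert (HcD : gcont_rect (fun z => g z - A z)%C (ra rN) (rb rN) (rc rN) (rd rN)).
  { apply gcont_of_cderiv. intros x y Hx Hy.
    assert (HhN : holo_on g rN) by (eapply holo_sub; eauto).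
    destruct WN as [WN1 WN2].
    destruct (HhN x y) as [l1 Hl1]. apply (inI_ord x _ _ WN1); auto. apply (inI_ord y _ _ WN2); auto.
    exists (l1 - l)%C. apply cderiv_minus; auto.
    pose proof (cderiv_minus _ _ (x, y) _ _ (cderiv_id (x, y)) (cderiv_const (xs, ys) (x, y))) as H2.
    pose proof (cderiv_scal l _ _ _ H2) as H3.
    pose proof (cderiv_plus _ _ _ _ _ (cderiv_const (g (xs, ys)) (x, y)) H3) as H4.
    eapply cderiv_eq; [|exact H4]. ring. }
  assert (Bd : Cmod (RectR g rN) <= 4 * (w0 * p + h0 * p) * (eps * ((w0 + h0) * p))).
  { rewrite E. destruct WN as [WN1 WN2].
    replace (w0 * p) with (Rabs (rb rN - ra rN)) by (rewrite EW; apply Rabs_right; nra).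
    replace (h0 * p) with (Rabs (rd rN - rc rN)) by (rewrite EH; apply Rabs_right; nra).
    apply Rect_bound; auto.
    intros x y Hx Hy.
    apply (inI_ord x _ _ WN1) in Hx. apply (inI_ord y _ _ WN2) in Hy.
    destruct (Hlim N) as [Lx Ly]. fold rN in Lx, Ly.
    set (h := ((x, y) - (xs, ys))%C).
    assert (Hh1 : Cmod h <= (w0 + h0) * p).
    { eapply Rle_trans; [apply Cmod_le_re_im|]. unfold h; simpl.

      assert (Rabs (x + - xs) <= w0 * p) by (apply Rabs_le; lra).
      assert (Rabs (y + - ys) <= h0 * p) by (apply Rabs_le; lra).
      lra. }
    specialize (Hd h ltac:(lra)).
    assert (E1 : ((xs, ys) + h)%C = (x, y) :> C) by (unfold h; ring).
    rewrite E1 in Hd.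
    assert (E2 : (g (x, y) - (g (xs, ys) + l * ((x, y) - (xs, ys))))%C = (g (x, y) - g (xs, ys) - l * h)%C :> C)
      by (unfold h; ring).
    unfold A. rewrite E2.
    eapply Rle_trans; [exact Hd|]. apply Rmult_le_compat_l; lra. }
  assert (Hp4 : (/4) ^ N = p * p).
  { unfold p. rewrite <- Rpow_mult_distr. f_equal. field. }
  rewrite Hp4 in BN.
  assert (Hp0 : 0 < p) by (unfold p; apply pow_lt; lra).
  assert (Cmod (RectR g r0) * (p * p) <= (4 * (w0 + h0) * (w0 + h0) * eps) * (p * p)) by nra.
  apply Rmult_le_reg_r in H; [|nra].
  unfold eps in H.
  assert (4 * (w0 + h0) * (w0 + h0) * (Cmod (RectR g r0) / (2 * K)) < Cmod (RectR g r0)).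
  { apply Rmult_lt_reg_r with (2 * K); [lra|].
    replace (4 * (w0 + h0) * (w0 + h0) * (Cmod (RectR g r0) / (2 * K)) * (2 * K))
      with (4 * (w0 + h0) * (w0 + h0) * Cmod (RectR g r0)) by (field; lra).
    unfold K.
    assert (0 <= (w0 + h0) * (w0 + h0)) by nra.
    assert (0 <= Cmod (RectR g r0) * ((w0 + h0) * (w0 + h0))) by (apply Rmult_le_pos; lra).
    nra. }
  lra.
Qed.
End Goursat.

Lemma goursat g a b c d : a <= b -> c <= d ->
  (forall x y, a <= x <= b -> c <= y <= d -> exists l, cderiv g (x, y) l) ->
  Rect g a b c d = RtoC 0.
Proof.
  intros H1 H2 H. apply (goursat_main g (mkR a b c d)).
  - split; simpl; auto.
  - intros x y Hx Hy. apply H; auto.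
Qed.

Definition holo_exc (g : C -> C) (E : list C) a b c d : Prop :=
  forall x y, inI x a b -> inI y c d -> ~ In ((x, y) : C) E -> exists l, cderiv g (x, y) l.

Lemma gcont_sub g a b c d a' b' c' d' : a <= b -> c <= d -> a <= a' <= b' -> b' <= b -> c <= c' <= d' -> d' <= d ->
  gcont_rect g a b c d -> gcont_rect g a' b' c' d'.
Proof.
  intros H1 H2 H3 H4 H5 H6 H x y Hx Hy. apply H.
  - apply inI_ord; auto. apply (inI_ord x a' b') in Hx; lra.
  - apply inI_ord; auto. apply (inI_ord y c' d') in Hy; lra.
Qed.

Lemma holo_sub' g E a b c d a' b' c' d' : a <= b -> c <= d -> a <= a' <= b' -> b' <= b -> c <= c' <= d' -> d' <= d ->
  holo_exc g E a b c d -> holo_exc g E a' b' c' d'.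
Proof.
  intros H1 H2 H3 H4 H5 H6 H x y Hx Hy. apply H.
  - apply inI_ord; auto. apply (inI_ord x a' b') in Hx; lra.
  - apply inI_ord; auto. apply (inI_ord y c' d') in Hy; lra.
Qed.

Lemma rect_cauchy_ord (g : C -> C) (E : list C) : forall a b c d, a <= b -> c <= d ->
  gcont_rect g a b c d -> holo_exc g E a b c d -> Rect g a b c d = RtoC 0.
Proof.
  induction E as [|p E IH]; intros a b c d Hab Hcd Hc Hh.
  - apply goursat; auto. intros x y Hx Hy. apply Hh.
    apply inI_ord; auto. apply inI_ord; auto. simpl; auto.
  - destruct p as [px py].
    assert (Avoid : forall a' b' c' d', a <= a' <= b' -> b' <= b -> c <= c' <= d' -> d' <= d ->
              (px < a' \/ b' < px \/ py < c' \/ d' < py) -> Rect g a' b' c' d' = RtoC 0).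
    { intros a' b' c' d' H1 H2 H3 H4 Hout.
      apply IH; try lra.
      - eapply gcont_sub; [| | | | | |exact Hc]; lra.
      - intros x y Hx Hy Hn. apply Hh.
        + apply inI_ord; auto. apply (inI_ord x a' b') in Hx; lra.
        + apply inI_ord; auto. apply (inI_ord y c' d') in Hy; lra.
        + simpl. intros [Heq|Hin]; auto.
          injection Heq; intros; subst.
          apply (inI_ord x a' b') in Hx; [|lra]. apply (inI_ord y c' d') in Hy; [|lra]. lra. }
    destruct (Rlt_dec px a) as [Ha|Ha]. { apply Avoid; lra. }
    destruct (Rlt_dec b px) as [Hb|Hb]. { apply Avoid; lra. }
    destruct (Rlt_dec py c) as [Hc'|Hc']. { apply Avoid; lra. }
    destruct (Rlt_dec d py) as [Hd|Hd]. { apply Avoid; lra. }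
    assert (Hpc : ccont g (px, py)).
    { apply Hc; apply inI_ord; lra. }
    destruct (Hpc 1 Rlt_0_1) as [d0 [Hd0 Hd0']].
    set (M := Cmod (g (px, py)) + 1).
    assert (HM : 0 < M) by (unfold M; pose proof (Cmod_ge_0 (g (px, py))); lra).
    assert (Key : forall del, 0 < del -> 2 * del < d0 -> Cmod (Rect g a b c d) <= 16 * del * M).
    { intros del Hdel Hdel0.
      set (x1 := Rmax a (px - del)). set (x2 := Rmin b (px + del)).
      set (y1 := Rmax c (py - del)). set (y2 := Rmin d (py + del)).
      assert (X1 : a <= x1 <= px) by (unfold x1, Rmax; destruct Rle_dec; lra).
      assert (X2 : px <= x2 <= b) by (unfold x2, Rmin; destruct Rle_dec; lra).
      assert (Y1 : c <= y1 <= py) by (unfold y1, Rmax; destruct Rle_dec; lra).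
      assert (Y2 : py <= y2 <= d) by (unfold y2, Rmin; destruct Rle_dec; lra).
      assert (X1' : x1 = a \/ x1 = px - del) by (unfold x1, Rmax; destruct Rle_dec; auto).
      assert (X2' : x2 = b \/ x2 = px + del) by (unfold x2, Rmin; destruct Rle_dec; auto).
      assert (Y1' : y1 = c \/ y1 = py - del) by (unfold y1, Rmax; destruct Rle_dec; auto).
      assert (Y2' : y2 = d \/ y2 = py + del) by (unfold y2, Rmin; destruct Rle_dec; auto).
      assert (X1'' : px - del <= x1) by (unfold x1; apply Rmax_r).
      assert (X2'' : x2 <= px + del) by (unfold x2; apply Rmin_r).
      assert (Y1'' : py - del <= y1) by (unfold y1; apply Rmax_r).
      assert (Y2'' : y2 <= py + del) by (unfold y2; apply Rmin_r).
      rewrite (Rect_splitx g a b c d x1) by (auto; apply inI_ord; lra).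
      assert (Hc2 : gcont_rect g x1 b c d) by (eapply gcont_sub; [| | | | | |exact Hc]; lra).
      rewrite (Rect_splitx g x1 b c d x2) by (auto; apply inI_ord; lra).
      assert (Hc3 : gcont_rect g x1 x2 c d) by (eapply gcont_sub; [| | | | | |exact Hc]; lra).
      rewrite (Rect_splity g x1 x2 c d y1) by (auto; apply inI_ord; lra).
      assert (Hc4 : gcont_rect g x1 x2 y1 d) by (eapply gcont_sub; [| | | | | |exact Hc]; lra).
      rewrite (Rect_splity g x1 x2 y1 d y2) by (auto; apply inI_ord; lra).
      assert (Z1 : Rect g a x1 c d = RtoC 0).
      { destruct X1' as [E1|E1]. rewrite E1. apply Rect_degx. apply Avoid; lra. }
      assert (Z2 : Rect g x2 b c d = RtoC 0).
      { destruct X2' as [E1|E1]. rewrite E1. apply Rect_degx. apply Avoid; lra. }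
      assert (Z3 : Rect g x1 x2 c y1 = RtoC 0).
      { destruct Y1' as [E1|E1]. rewrite E1. apply Rect_degy. apply Avoid; lra. }
      assert (Z4 : Rect g x1 x2 y2 d = RtoC 0).
      { destruct Y2' as [E1|E1]. rewrite E1. apply Rect_degy. apply Avoid; lra. }
      rewrite Z1, Z2, Z3, Z4.
      replace (RtoC 0 + (RtoC 0 + (Rect g x1 x2 y1 y2 + RtoC 0) + RtoC 0))%C with (Rect g x1 x2 y1 y2) by ring.
      eapply Rle_trans.
      - apply Rect_bound with (M := M).
        + eapply gcont_sub; [| | | | | |exact Hc]; lra.
        + intros x y Hx Hy.
          apply (inI_ord x x1 x2) in Hx; [|lra]. apply (inI_ord y y1 y2) in Hy; [|lra].
          assert (Hdist : Cmod ((x, y) - (px, py))%C < d0).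
          { eapply Rle_lt_trans; [apply Cmod_le_re_im|]. simpl.
            assert (Rabs (x + - px) <= del).
            { apply Rabs_le. destruct X1' as [E1|E1]; destruct X2' as [E2|E2]; lra. }
            assert (Rabs (y + - py) <= del).
            { apply Rabs_le. destruct Y1' as [E1|E1]; destruct Y2' as [E2|E2]; lra. }
            lra. }
          specialize (Hd0' _ Hdist).
          pose proof (Cmod_triangle (g (x, y) - g (px, py)) (g (px, py)))%C as T.
          replace (g (x, y) - g (px, py) + g (px, py))%C with (g (x, y)) in T by ring.
          unfold M; lra.
      - assert (Rabs (x2 - x1) <= 2 * del).
        { apply Rabs_le. destruct X1' as [E1|E1]; destruct X2' as [E2|E2]; lra. }
        assert (Rabs (y2 - y1) <= 2 * del).
        { apply Rabs_le. destruct Y1' as [E1|E1]; destruct Y2' as [E2|E2]; lra. }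
        nra. }
    apply Cmod_eq_0. apply Rle_antisym; [|apply Cmod_ge_0].
    apply Rnot_lt_le. intros Hpos.
    set (del := Rmin (d0 / 4) (Cmod (Rect g a b c d) / (32 * M))).
    assert (Hdel : 0 < del).
    { apply Rmin_pos. lra. apply Rdiv_lt_0_compat; lra. }
    specialize (Key del Hdel).
    assert (2 * del < d0) by (pose proof (Rmin_l (d0 / 4) (Cmod (Rect g a b c d) / (32 * M))); unfold del in *; lra).
    specialize (Key H).
    assert (del <= Cmod (Rect g a b c d) / (32 * M)) by (apply Rmin_r).
    assert (16 * del * M <= 16 * (Cmod (Rect g a b c d) / (32 * M)) * M) by (apply Rmult_le_compat_r; lra).
    replace (16 * (Cmod (Rect g a b c d) / (32 * M)) * M) with (Cmod (Rect g a b c d) / 2) in H1 by (field; lra).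
    lra.
Qed.

Lemma Rect_swapx g a b c d : gcont_rect g a b c d -> Rect g b a c d = (- Rect g a b c d)%C.
Proof.
  intros H. unfold Rect, Hs.
  rewrite (CInt_swap (fun x => g (x, c)) a b) by (apply (cex_hor g a b c d c H (inI_a _ _))).
  rewrite (CInt_swap (fun x => g (x, d)) a b) by (apply (cex_hor g a b c d d H (inI_b _ _))).
  ring.
Qed.

Lemma Rect_swapy g a b c d : gcont_rect g a b c d -> Rect g a b d c = (- Rect g a b c d)%C.
Proof.
  intros H. unfold Rect, Vs.
  rewrite (CInt_swap (fun y => g (a, y)) c d) by (apply (cex_ver g a b c d a H (inI_a _ _))).
  rewrite (CInt_swap (fun y => g (b, y)) c d) by (apply (cex_ver g a b c d b H (inI_b _ _))).
  ring.
Qed.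

Lemma gcont_swapx g a b c d : gcont_rect g a b c d -> gcont_rect g b a c d.
Proof. intros H x y Hx Hy. apply H; auto. apply inI_sym; auto. Qed.
Lemma gcont_swapy g a b c d : gcont_rect g a b c d -> gcont_rect g a b d c.
Proof. intros H x y Hx Hy. apply H; auto. apply inI_sym; auto. Qed.
Lemma holo_swapx g E a b c d : holo_exc g E a b c d -> holo_exc g E b a c d.
Proof. intros H x y Hx Hy. apply H; auto. apply inI_sym; auto. Qed.
Lemma holo_swapy g E a b c d : holo_exc g E a b c d -> holo_exc g E a b d c.
Proof. intros H x y Hx Hy. apply H; auto. apply inI_sym; auto. Qed.

Lemma rect_cauchy (g : C -> C) (E : list C) a b c d :
  gcont_rect g a b c d -> holo_exc g E a b c d -> Rect g a b c d = RtoC 0.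
Proof.
  intros Hc Hh.
  assert (K1 : forall a b c d, a <= b -> gcont_rect g a b c d -> holo_exc g E a b c d -> Rect g a b c d = RtoC 0).
  { clear a b c d Hc Hh. intros a b c d Hab Hc Hh.
    destruct (Rle_dec c d) as [Hcd|Hcd].
    - apply (rect_cauchy_ord g E); auto.
    - rewrite (Rect_swapy g a b d c) by (apply gcont_swapy; auto).
      rewrite (rect_cauchy_ord g E a b d c); auto; try lra.
      + apply injective_projections; simpl; ring.
      + apply gcont_swapy; auto.
      + apply holo_swapy; auto. }
  destruct (Rle_dec a b) as [Hab|Hab].
  - apply K1; auto.
  - rewrite (Rect_swapx g b a c d) by (apply gcont_swapx; auto).
    rewrite (K1 b a c d); try lra.
    + apply injective_projections; simpl; ring.
    + apply gcont_swapx; auto.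
    + apply holo_swapx; auto.
Qed.

Lemma ccont_mul (f g : C -> C) z : ccont f z -> ccont g z -> ccont (fun u => f u * g u)%C z.
Proof.
  intros Hf Hg eps Heps.
  set (K := Cmod (g z) + Cmod (f z) + 2).
  assert (HK : 0 < K) by (unfold K; pose proof (Cmod_ge_0 (g z)); pose proof (Cmod_ge_0 (f z)); lra).
  set (eta := Rmin 1 (eps / K)).
  assert (Heta : 0 < eta) by (apply Rmin_pos; [lra| apply Rdiv_lt_0_compat; lra]).
  destruct (Hf eta Heta) as [d1 [Hd1 H1]].
  destruct (Hg eta Heta) as [d2 [Hd2 H2]].
  exists (Rmin d1 d2). split. apply Rmin_pos; auto.
  intros u Hu.
  pose proof (Rmin_l d1 d2). pose proof (Rmin_r d1 d2).
  specialize (H1 u ltac:(lra)). specialize (H2 u ltac:(lra)).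
  replace (f u * g u - f z * g z)%C with ((f u - f z) * g u + f z * (g u - g z))%C by ring.
  eapply Rle_lt_trans; [apply Cmod_triangle|]. rewrite !Cmod_mult.
  assert (Hgu : Cmod (g u) <= Cmod (g z) + 1).
  { pose proof (Cmod_triangle (g u - g z) (g z))%C as T.
    replace (g u - g z + g z)%C with (g u) in T by ring.
    pose proof (Rmin_l 1 (eps / K)). fold eta in H3. lra. }
  pose proof (Rmin_r 1 (eps / K)). fold eta in H3.
  pose proof (Cmod_ge_0 (f u - f z)%C). pose proof (Cmod_ge_0 (g u - g z)%C).
  pose proof (Cmod_ge_0 (f z)). pose proof (Cmod_ge_0 (g u)).
  assert (Cmod (f u - f z)%C * Cmod (g u) <= eta * (Cmod (g z) + 1)) by nra.
  assert (Cmod (f z) * Cmod (g u - g z)%C <= Cmod (f z) * eta) by nra.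
  assert (eta * K <= eps).
  { apply Rle_trans with (eps / K * K). apply Rmult_le_compat_r; lra. right; field; lra. }
  unfold K in *. nra.
Qed.

Lemma ccont_id z : ccont (fun u => u) z.
Proof. intros eps He. exists eps. split; auto. Qed.

Lemma ccont_const (k z : C) : ccont (fun _ => k) z.
Proof. intros eps He. exists 1. split; [lra|]. intros u _. replace (k - k)%C with (RtoC 0) by ring. rewrite Cmod_0. lra. Qed.

Lemma Cmod_pair (p q : R) : Cmod (p, q) = sqrt (p * p + q * q).
Proof. unfold Cmod; simpl. f_equal. ring. Qed.

Lemma Cmod_lt_iff (p q Rr : R) : 0 < Rr -> (Cmod (p, q) < Rr <-> p * p + q * q < Rr * Rr).
Proof.
  intros HR. rewrite Cmod_pair. split; intros H.
  - assert (0 <= p * p + q * q) by nra.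
    apply sqrt_lt_0_alt. rewrite sqrt_square by lra. auto.
  - rewrite <- (sqrt_square Rr) by lra. apply sqrt_lt_1; nra.
Qed.

Lemma sq_le_or a b x : a <= x <= b -> x * x <= a * a \/ x * x <= b * b.
Proof.
  intros H. destruct (Rle_dec 0 (a + b)).
  - right. nra.
  - left. nra.
Qed.

Lemma sq_le_max x a b : inI x a b -> x * x <= Rmax (a * a) (b * b).
Proof.
  unfold inI, Rmin, Rmax. intros H. destruct (Rle_dec a b).
  - destruct (sq_le_or a b x H); destruct Rle_dec; lra.
  - destruct (sq_le_or b a x H); destruct Rle_dec; lra.
Qed.

Lemma rect_in_disk Rr a b c d x y : 0 < Rr ->
  Cmod (a, c) < Rr -> Cmod (a, d) < Rr -> Cmod (b, c) < Rr -> Cmod (b, d) < Rr ->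
  inI x a b -> inI y c d -> Cmod (x, y) < Rr.
Proof.
  intros HR H1 H2 H3 H4 Hx Hy.
  apply Cmod_lt_iff in H1, H2, H3, H4; auto. apply Cmod_lt_iff; auto.
  pose proof (sq_le_max x a b Hx). pose proof (sq_le_max y c d Hy).
  unfold Rmax in *. repeat destruct Rle_dec; lra.
Qed.

Section Disk.
Variable Rr : R.
Hypothesis HRr : 0 < Rr.
Variable g : C -> C.
Variable E : list C.
Hypothesis Hcont : forall z, Cmod z < Rr -> ccont g z.
Hypothesis Hhol : forall z, Cmod z < Rr -> ~ In z E -> exists l, cderiv g z l.

Lemma disk_rect_ok a b c d :
  Cmod (a, c) < Rr -> Cmod (a, d) < Rr -> Cmod (b, c) < Rr -> Cmod (b, d) < Rr ->
  gcont_rect g a b c d /\ holo_exc g E a b c d.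
Proof.
  intros H1 H2 H3 H4. split.
  - intros x y Hx Hy. apply Hcont. apply (rect_in_disk Rr a b c d x y); auto.
  - intros x y Hx Hy Hn. apply Hhol; auto. apply (rect_in_disk Rr a b c d x y); auto.
Qed.

Definition Prim (z : C) : C := (Hs g 0 0 (fst z) + Ci * Vs g (fst z) 0 (snd z))%C.

Lemma abs_le_Cmod_fst (p q : R) : Rabs p <= Cmod (p, q).
Proof. apply (re_le_Cmod' (p, q)). Qed.
Lemma abs_le_Cmod_snd (p q : R) : Rabs q <= Cmod (p, q).
Proof. apply (im_le_Cmod' (p, q)). Qed.

Lemma Cmod_p0 (p : R) : Cmod (p, 0) = Rabs p.
Proof. apply (Cmod_R p). Qed.

Lemma Prim_deriv z : Cmod z < Rr -> cderiv Prim z (g z).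
Proof.
  intros Hz. destruct z as [x y].
  set (rho := (Rr - Cmod (x, y)) / 2).
  assert (Hrho : 0 < rho) by (unfold rho; lra).
  intros eps Heps.
  destruct (Hcont (x, y) Hz (eps / 8) ltac:(lra)) as [d1 [Hd1 Hc1]].
  exists (Rmin rho (d1 / 2)). split. apply Rmin_pos; lra.
  intros [h1 h2] Hh.
  pose proof (Rmin_l rho (d1 / 2)). pose proof (Rmin_r rho (d1 / 2)).
  set (x' := x + h1). set (y' := y + h2).
  assert (Hh1 : Rabs h1 <= Cmod (h1, h2)) by apply abs_le_Cmod_fst.
  assert (Hh2 : Rabs h2 <= Cmod (h1, h2)) by apply abs_le_Cmod_snd.
  assert (Pz : Cmod (x, y) < Rr) by auto.
  assert (Px0 : Cmod (x, 0) < Rr).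
  { rewrite Cmod_p0. eapply Rle_lt_trans; [apply abs_le_Cmod_fst|]. exact Hz. }
  assert (Pzh : Cmod (x', y') < Rr).
  { replace ((x', y') : C) with ((x, y) + (h1, h2))%C by (unfold x', y'; apply injective_projections; simpl; ring).
    eapply Rle_lt_trans; [apply Cmod_triangle|]. unfold rho in *; lra. }
  assert (Px'0 : Cmod (x', 0) < Rr).
  { rewrite Cmod_p0. eapply Rle_lt_trans; [apply abs_le_Cmod_fst|]. exact Pzh. }
  assert (Px'y : Cmod (x', y) < Rr).
  { replace ((x', y) : C) with ((x, y) + (h1, 0))%C by (unfold x'; apply injective_projections; simpl; ring).
    eapply Rle_lt_trans; [apply Cmod_triangle|]. rewrite Cmod_p0. unfold rho in *; lra. }
  assert (Pxy'0 : Cmod (0, y) < Rr).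
  { rewrite <- (Cmod_opp (0, y)). unfold Copp; simpl. eapply Rle_lt_trans; [|exact Hz].
    rewrite !Cmod_pair. apply sqrt_le_1_alt. nra. }
  assert (P00 : Cmod (0, 0) < Rr) by (rewrite Cmod_p0, Rabs_R0; lra).
  assert (Px'y0 : Cmod (0, 0) < Rr) by auto.
  destruct (disk_rect_ok x x' 0 y) as [Gi Hi]; auto.
  pose proof (rect_cauchy g E x x' 0 y Gi Hi) as Ri.
  destruct (disk_rect_ok 0 x 0 0) as [G1 _]; auto.
  destruct (disk_rect_ok x x' 0 0) as [G2 _]; auto.
  destruct (disk_rect_ok x' x' 0 y) as [G3 _]; auto.
  destruct (disk_rect_ok x' x' y y') as [G4 _]; auto.
  destruct (disk_rect_ok x x' y y) as [G5 _]; auto.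
  assert (C1 : Hs g 0 0 x' = (Hs g 0 0 x + Hs g 0 x x')%C).
  { unfold Hs. symmetry. apply CInt_Chasles.
    apply (cex_hor g 0 x 0 0 0 G1 (inI_a _ _)). apply (cex_hor g x x' 0 0 0 G2 (inI_a _ _)). }
  assert (C2 : Vs g x' 0 y' = (Vs g x' 0 y + Vs g x' y y')%C).
  { unfold Vs. symmetry. apply CInt_Chasles.
    apply (cex_ver g x' x' 0 y x' G3 (inI_a _ _)). apply (cex_ver g x' x' y y' x' G4 (inI_a _ _)). }
  assert (Diff : (Prim ((x + h1)%R, (y + h2)%R) - Prim (x, y))%C = (Hs g y x x' + Ci * Vs g x' y y')%C).
  { unfold Prim; simpl. fold x' y'. rewrite C1, C2.
    assert (Ri' : Hs g 0 x x' = (Hs g y x x' + Ci * Vs g x 0 y - Ci * Vs g x' 0 y)%C).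
    { transitivity (Rect g x x' 0 y + (Hs g y x x' + Ci * Vs g x 0 y - Ci * Vs g x' 0 y))%C.
      unfold Rect; ring. rewrite Ri; ring. }
    rewrite Ri'. ring. }
  replace ((x, y) + (h1, h2))%C with (((x + h1)%R, (y + h2)%R) : C) by (apply injective_projections; simpl; ring).
  rewrite Diff.
  assert (Eh : ((h1, h2) : C) = (RtoC h1 + Ci * RtoC h2)%C) by (apply injective_projections; simpl; ring).
  rewrite Eh.
  assert (Ehs : (Hs g y x x' - g (x, y) * RtoC h1)%C = CInt (fun s => g (s, y) - g (x, y))%C x x').
  { unfold Hs. rewrite CInt_minus, CInt_const.
    - unfold x'. replace (x + h1 - x) with h1 by ring. ring.
    - apply (cex_hor g x x' y y y G5 (inI_a _ _)).
    - split; apply ex_RInt_const. }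
  assert (Evs : (Vs g x' y y' - g (x, y) * RtoC h2)%C = CInt (fun s => g (x', s) - g (x, y))%C y y').
  { unfold Vs. rewrite CInt_minus, CInt_const.
    - unfold y'. replace (y + h2 - y) with h2 by ring. ring.
    - apply (cex_ver g x' x' y y' x' G4 (inI_a _ _)).
    - split; apply ex_RInt_const. }
  replace (Hs g y x x' + Ci * Vs g x' y y' - g (x, y) * (RtoC h1 + Ci * RtoC h2))%C
    with ((Hs g y x x' - g (x, y) * RtoC h1) + Ci * (Vs g x' y y' - g (x, y) * RtoC h2))%C by ring.
  rewrite Ehs, Evs.
  eapply Rle_trans; [apply Cmod_triangle|]. rewrite Cmod_mult, Cmod_Ci, Rmult_1_l.
  assert (B1 : Cmod (CInt (fun s => g (s, y) - g (x, y))%C x x') <= 2 * Rabs (x' - x) * (eps / 8)).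
  { apply CInt_bound.
    - apply cex_minus. apply (cex_hor g x x' y y y G5 (inI_a _ _)). split; apply ex_RInt_const.
    - intros t Ht. left. apply Hc1.
      eapply Rle_lt_trans; [apply Cmod_le_re_im|]. simpl.
      replace (y + - y) with 0 by ring. rewrite Rabs_R0.
      assert (Rabs (t + - x) <= Rabs h1).
      { unfold x' in Ht. unfold inI, Rmin, Rmax in Ht. apply Rabs_le. destruct Rle_dec; unfold Rabs; destruct Rcase_abs; lra. }
      lra. }
  assert (B2 : Cmod (CInt (fun s => g (x', s) - g (x, y))%C y y') <= 2 * Rabs (y' - y) * (eps / 8)).
  { apply CInt_bound.
    - apply cex_minus. apply (cex_ver g x' x' y y' x' G4 (inI_a _ _)). split; apply ex_RInt_const.
    - intros t Ht. left. apply Hc1.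
      eapply Rle_lt_trans; [apply Cmod_le_re_im|]. simpl.
      assert (Rabs (t + - y) <= Rabs h2).
      { unfold y' in Ht. unfold inI, Rmin, Rmax in Ht. apply Rabs_le. destruct Rle_dec; unfold Rabs; destruct Rcase_abs; lra. }
      unfold x'. replace (x + h1 + - x) with h1 by ring. lra. }
  unfold x', y' in B1, B2. replace (x + h1 - x) with h1 in B1 by ring. replace (y + h2 - y) with h2 in B2 by ring.
  rewrite <- Eh.
  assert (Cmod (h1, h2) >= 0) by (apply Rle_ge, Cmod_ge_0).
  unfold x', y'. nra.
Qed.

End Disk.

Definition gam (r t : R) : C := (r * cos t, r * sin t).

Definition circ (k : C -> C) (r : R) : C :=
  CInt (fun t => k (gam r t) * (Ci * gam r t))%C 0 (2 * PI).

Lemma Cmod_gam r t : Cmod (gam r t) = Rabs r.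
Proof.
  unfold gam. rewrite Cmod_pair.
  replace (r * cos t * (r * cos t) + r * sin t * (r * sin t)) with (r * r) .
  - apply (sqrt_Rsqr_abs r).
  - pose proof (sin2_cos2 t). unfold Rsqr in H. nra.
Qed.

Lemma pderiv_gam r t : pderiv (gam r) t (Ci * gam r t)%C.
Proof.
  apply pderiv_components; unfold gam; simpl.
  - replace (0 * (r * cos t) - 1 * (r * sin t)) with (r * - sin t) by ring.
    apply is_derive_scal. apply is_derive_cos.
  - replace (0 * (r * sin t) + 1 * (r * cos t)) with (r * cos t) by ring.
    apply is_derive_scal. apply is_derive_sin.
Qed.

Lemma ccont_comp (F G : C -> C) z : ccont G z -> ccont F (G z) -> ccont (fun u => F (G u)) z.
Proof.
  intros HG HF eps He. destruct (HF eps He) as [d [Hd H]].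
  destruct (HG d Hd) as [e [He' H']]. exists e. split; auto.
Qed.

Lemma circ_integrand_cont (k : C -> C) r t : ccont k (gam r t) ->
  pcont (fun s => k (gam r s) * (Ci * gam r s))%C t.
Proof.
  intros Hk.
  apply (pcont_comp (fun z => k z * (Ci * z))%C (gam r)).
  - eapply pderiv_pcont. apply pderiv_gam.
  - apply ccont_mul; auto. apply ccont_mul. apply ccont_const. apply ccont_id.
Qed.

Lemma circ_cex (k : C -> C) r : (forall t, ccont k (gam r t)) ->
  cex (fun s => k (gam r s) * (Ci * gam r s))%C 0 (2 * PI).
Proof. intros H. apply cex_cont. intros t _. apply circ_integrand_cont; auto. Qed.

Lemma gam_2PI r : gam r (2 * PI) = gam r 0.
Proof. unfold gam. rewrite cos_2PI, sin_2PI, cos_0, sin_0. reflexivity. Qed.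

Lemma circ_prim (F k : C -> C) r :
  (forall t, cderiv F (gam r t) (k (gam r t))) -> (forall t, ccont k (gam r t)) ->
  circ k r = RtoC 0.
Proof.
  intros HF Hk. unfold circ.
  rewrite (CInt_FTC (fun t => F (gam r t))).
  - rewrite gam_2PI. ring.
  - intros t _. apply pderiv_comp. apply pderiv_gam. apply HF.
  - intros t _. apply circ_integrand_cont; auto.
Qed.

Lemma circ_bound (k : C -> C) r M : 0 <= r -> (forall t, ccont k (gam r t)) ->
  (forall t, Cmod (k (gam r t)) <= M) -> Cmod (circ k r) <= 4 * PI * (M * r).
Proof.
  intros Hr Hc HM. unfold circ.
  eapply Rle_trans. apply CInt_bound with (M := M * r).
  - apply circ_cex; auto.
  - intros t _. rewrite !Cmod_mult, Cmod_Ci, Cmod_gam, Rabs_right by lra.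
    pose proof (Cmod_ge_0 (k (gam r t))). specialize (HM t). nra.
  - rewrite Rabs_right by (pose proof PI_RGT_0; lra). right; ring.
Qed.

Lemma circ_plus (k1 k2 : C -> C) r : (forall t, ccont k1 (gam r t)) -> (forall t, ccont k2 (gam r t)) ->
  circ (fun z => k1 z + k2 z)%C r = (circ k1 r + circ k2 r)%C.
Proof.
  intros H1 H2. unfold circ. rewrite <- CInt_plus by (apply circ_cex; auto).
  apply CInt_ext. intros; ring.
Qed.

Lemma circ_minus (k1 k2 : C -> C) r : (forall t, ccont k1 (gam r t)) -> (forall t, ccont k2 (gam r t)) ->
  circ (fun z => k1 z - k2 z)%C r = (circ k1 r - circ k2 r)%C.
Proof.
  intros H1 H2. unfold circ. rewrite <- CInt_minus by (apply circ_cex; auto).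
  apply CInt_ext. intros; ring.
Qed.

Lemma circ_cmul (c : C) (k : C -> C) r : (forall t, ccont k (gam r t)) ->
  circ (fun z => c * k z)%C r = (c * circ k r)%C.
Proof.
  intros H1. unfold circ. rewrite <- CInt_cmul by (apply circ_cex; auto).
  apply CInt_ext. intros; ring.
Qed.

Lemma circ_ext (k1 k2 : C -> C) r : (forall t, k1 (gam r t) = k2 (gam r t)) -> circ k1 r = circ k2 r.
Proof. intros H. unfold circ. apply CInt_ext. intros t _. rewrite H. reflexivity. Qed.

Lemma gam_nz r t : 0 < r -> gam r t <> RtoC 0.
Proof. intros Hr E. pose proof (Cmod_gam r t). rewrite E, Cmod_0, Rabs_right in H by lra. lra. Qed.

Lemma circ_inv r : 0 < r -> circ (fun z => / z)%C r = (RtoC (2 * PI) * Ci)%C.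
Proof.
  intros Hr. unfold circ.
  rewrite (CInt_ext _ (fun _ => Ci)).
  - rewrite CInt_const. f_equal. f_equal. ring.
  - intros t _. field. apply gam_nz; auto.
Qed.

Lemma cderiv_ccont' (F : C -> C) z : (exists l, cderiv F z l) -> ccont F z.
Proof. intros [l H]. eapply cderiv_ccont; eauto. Qed.

Lemma cderiv_inv_sub (z0 z : C) : z <> z0 -> cderiv (fun u => / (u - z0))%C z (- (1 - 0) / ((z - z0) * (z - z0)))%C.
Proof.
  intros H. apply (cderiv_inv (fun u => u - z0)%C).
  - intros E. apply H. simpl in E. transitivity ((z - z0) + z0)%C; [ring|]. rewrite E. ring.
  - apply cderiv_minus. apply cderiv_id. apply cderiv_const.
Qed.

Lemma ccont_inv (z : C) : z <> RtoC 0 -> ccont (fun u => / u)%C z.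
Proof. intros H. eapply cderiv_ccont. apply cderiv_inv_id; auto. Qed.

Lemma ccont_pow (f : C -> C) z n : ccont f z -> ccont (fun u => Cpow (f u) n) z.
Proof.
  intros H. induction n as [|n IH]; simpl.
  - apply ccont_const.
  - apply ccont_mul; auto.
Qed.

Lemma ccont_minus (f g : C -> C) z : ccont f z -> ccont g z -> ccont (fun u => f u - g u)%C z.
Proof.
  intros Hf Hg eps He.
  destruct (Hf (eps/2) ltac:(lra)) as [d1 [Hd1 H1]].
  destruct (Hg (eps/2) ltac:(lra)) as [d2 [Hd2 H2]].
  exists (Rmin d1 d2). split. apply Rmin_pos; auto.
  intros u Hu. pose proof (Rmin_l d1 d2). pose proof (Rmin_r d1 d2).
  specialize (H1 u ltac:(lra)). specialize (H2 u ltac:(lra)).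
  replace (f u - g u - (f z - g z))%C with ((f u - f z) + - (g u - g z))%C by ring.
  eapply Rle_lt_trans; [apply Cmod_triangle|]. rewrite Cmod_opp. lra.
Qed.

Lemma ccont_inv_sub (z0 z : C) : z <> z0 -> ccont (fun u => / (u - z0))%C z.
Proof. intros H. eapply cderiv_ccont. apply cderiv_inv_sub; auto. Qed.

Lemma gam_neq r t z0 : Cmod z0 < r -> gam r t <> z0.
Proof. intros H E. pose proof (Cmod_gam r t). rewrite E in H0. pose proof (Cmod_ge_0 z0).
  rewrite Rabs_right in H0 by lra. lra. Qed.

Lemma Cmod_gam_sub r t z0 : Cmod z0 < r -> r - Cmod z0 <= Cmod (gam r t - z0)%C.
Proof.
  intros H. pose proof (Cmod_triangle (gam r t - z0) z0)%C as T.
  replace (gam r t - z0 + z0)%C with (gam r t) in T by ring.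
  rewrite Cmod_gam in T. pose proof (Cmod_ge_0 z0). rewrite Rabs_right in T by lra. lra.
Qed.

Lemma circ_power_zero r z0 N : 0 < r ->
  circ (fun z => Cpow (z0 * / z) (S N) * / z)%C r = RtoC 0.
Proof.
  intros Hr.
  set (c := RtoC (- / INR (S N))).
  apply (circ_prim (fun z => c * Cpow (z0 * / z) (S N))%C).
  - intros t. pose proof (gam_nz r t Hr) as Hz.
    pose proof (cderiv_scal z0 _ _ _ (cderiv_inv_id _ Hz)) as H1.
    pose proof (cderiv_pow _ _ _ (S N) H1) as H2.
    pose proof (cderiv_scal c _ _ _ H2) as H3.
    eapply cderiv_eq; [|exact H3].
    unfold c. cbn [Init.Nat.pred Cpow].
    assert (HN : INR (S N) <> 0) by (apply not_0_INR; lia).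
    assert (HN' : RtoC (INR (S N)) <> RtoC 0) by (intros E; apply HN; injection E; auto).
    generalize (Cpow (z0 * / gam r t) N); intros P.
    rewrite RtoC_opp, RtoC_inv by auto.
    field. split; auto.
  - intros t. pose proof (gam_nz r t Hr) as Hz.
    apply ccont_mul. apply ccont_pow. apply ccont_mul. apply ccont_const. apply ccont_inv; auto.
    apply ccont_inv; auto.
Qed.

Lemma winding r z0 : 0 < r -> Cmod z0 < r -> circ (fun z => / (z - z0))%C r = (RtoC (2 * PI) * Ci)%C.
Proof.
  intros Hr Hz0.
  assert (Hcr : forall t, gam r t <> RtoC 0) by (intros; apply gam_nz; auto).
  assert (Hcz : forall t, gam r t <> z0) by (intros; apply gam_neq; auto).
  assert (Hz0' : forall t, (gam r t - z0)%C <> RtoC 0).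
  { intros t E. apply (Hcz t). transitivity ((gam r t - z0) + z0)%C; [ring|]. rewrite E. ring. }
  assert (Rem : forall N, circ (fun z => / (z - z0))%C r =
     (RtoC (2 * PI) * Ci + circ (fun z => Cpow (z0 * / z) (S N) * / (z - z0)) r)%C).
  { induction N as [|N IH].
    - rewrite (circ_ext _ (fun z => / z + Cpow (z0 * / z) 1 * / (z - z0))%C).
      + rewrite circ_plus. rewrite circ_inv; auto.
        * intros t. apply ccont_inv; auto.
        * intros t. apply ccont_mul. apply ccont_pow. apply ccont_mul. apply ccont_const. apply ccont_inv; auto.
          apply ccont_inv_sub; auto.
      + intros t. simpl. field. split; auto.
    - rewrite IH.
      rewrite (circ_ext (fun z => Cpow (z0 * / z) (S N) * / (z - z0))%C
                (fun z => Cpow (z0 * / z) (S N) * / z + Cpow (z0 * / z) (S (S N)) * / (z - z0))%C).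
      + rewrite circ_plus. rewrite circ_power_zero; auto. ring.
        * intros t. apply ccont_mul. apply ccont_pow. apply ccont_mul. apply ccont_const. apply ccont_inv; auto.
          apply ccont_inv; auto.
        * intros t. apply ccont_mul. apply ccont_pow. apply ccont_mul. apply ccont_const. apply ccont_inv; auto.
          apply ccont_inv_sub; auto.
      + intros t. change (Cpow (z0 * / gam r t) (S (S N))) with ((z0 * / gam r t) * Cpow (z0 * / gam r t) (S N))%C.
        generalize (Cpow (z0 * / gam r t) (S N)); intros P. field. split; auto. }
  set (W := circ (fun z => / (z - z0))%C r).
  set (q := Cmod z0 / r).
  assert (Hq0 : 0 <= q) by (unfold q; apply Rmult_le_pos; [apply Cmod_ge_0| apply Rlt_le, Rinv_0_lt_compat; lra]).
  assert (Hq1 : q < 1).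
  { apply Rmult_lt_reg_r with r; [lra|]. unfold q.
    replace (Cmod z0 / r * r) with (Cmod z0) by (field; lra). lra. }
  set (K := 4 * PI * r / (r - Cmod z0)).
  assert (HK : 0 < K) by (unfold K; pose proof PI_RGT_0; apply Rdiv_lt_0_compat; nra).
  assert (Bnd : forall N, Cmod (W - RtoC (2 * PI) * Ci)%C <= K * q ^ (S N)).
  { intros N. unfold W. rewrite (Rem N).
    replace (RtoC (2 * PI) * Ci + circ (fun z => Cpow (z0 * / z) (S N) * / (z - z0)) r - RtoC (2 * PI) * Ci)%C
      with (circ (fun z => Cpow (z0 * / z) (S N) * / (z - z0))%C r) by ring.
    eapply Rle_trans. apply circ_bound with (M := q ^ (S N) / (r - Cmod z0)).
    - lra.
    - intros t. apply ccont_mul. apply ccont_pow. apply ccont_mul. apply ccont_const. apply ccont_inv; auto.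
      apply ccont_inv_sub; auto.
    - intros t. rewrite Cmod_mult, Cmod_pow, Cmod_mult, !Cmod_inv; auto.
      rewrite Cmod_gam, Rabs_right by lra.
      pose proof (Cmod_gam_sub r t z0 Hz0).
      assert (0 < Cmod (gam r t - z0)%C) by lra.
      replace (Cmod z0 * / r) with q by (unfold q; field; lra).
      assert (0 <= q ^ S N) by (apply pow_le; auto).
      unfold Rdiv. apply Rmult_le_compat_l; auto.
      apply Rinv_le_contravar; lra.
    - unfold K. right. field. lra. }
  assert (X0 : Cmod (W - RtoC (2 * PI) * Ci)%C = 0).
  { apply Rle_antisym; [|apply Cmod_ge_0].
    apply Rnot_lt_le. intros Hpos.
    set (X := Cmod (W - RtoC (2 * PI) * Ci)%C) in *.
    destruct (pow_lt_1_zero q ltac:(rewrite Rabs_right; lra) (X / (2 * K))) as [N HN].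
    { apply Rdiv_lt_0_compat; lra. }
    specialize (HN (S N) ltac:(lia)). rewrite Rabs_right in HN by (apply Rle_ge, pow_le; auto).
    specialize (Bnd N).
    assert (K * q ^ S N < K * (X / (2 * K))) by (apply Rmult_lt_compat_l; auto).
    replace (K * (X / (2 * K))) with (X / 2) in H by (field; lra).
    lra. }
  apply Cmod_eq_0 in X0.
  transitivity ((W - RtoC (2 * PI) * Ci) + RtoC (2 * PI) * Ci)%C; [unfold W; ring|].
  rewrite X0. ring.
Qed.

Lemma cauchy_circ Rr (g : C -> C) (E : list C) : 0 < Rr ->
  (forall z, Cmod z < Rr -> ccont g z) ->
  (forall z, Cmod z < Rr -> ~ In z E -> exists l, cderiv g z l) ->
  forall r, 0 <= r < Rr -> circ g r = RtoC 0.
Proof.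
  intros HR Hc Hh r Hr.
  apply (circ_prim (Prim g)).
  - intros t. apply (Prim_deriv Rr HR g E Hc Hh). rewrite Cmod_gam, Rabs_right; lra.
  - intros t. apply Hc. rewrite Cmod_gam, Rabs_right; lra.
Qed.

Lemma ccont_local (h q : C -> C) z : (exists d, 0 < d /\ forall u, Cmod (u - z) < d -> h u = q u) ->
  ccont q z -> ccont h z.
Proof.
  intros [d [Hd Hq]] H eps He. destruct (H eps He) as [e [He' H']].
  exists (Rmin d e). split. apply Rmin_pos; auto.
  intros u Hu. pose proof (Rmin_l d e). pose proof (Rmin_r d e).
  rewrite (Hq u) by lra. rewrite (Hq z) by (replace (z - z)%C with (RtoC 0) by ring; rewrite Cmod_0; lra).
  apply H'; lra.
Qed.

Lemma cderiv_local (h q : C -> C) z l : (exists d, 0 < d /\ forall u, Cmod (u - z) < d -> h u = q u) ->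
  cderiv q z l -> cderiv h z l.
Proof.
  intros [d [Hd Hq]] H eps He. destruct (H eps He) as [e [He' H']].
  exists (Rmin d e). split. apply Rmin_pos; auto.
  intros u Hu. pose proof (Rmin_l d e). pose proof (Rmin_r d e).
  rewrite (Hq (z + u)%C) by (replace (z + u - z)%C with u by ring; lra).
  rewrite (Hq z) by (replace (z - z)%C with (RtoC 0) by ring; rewrite Cmod_0; lra).
  apply H'; lra.
Qed.

Lemma neq_ball (z z0 : C) : z <> z0 -> exists d, 0 < d /\ forall u, Cmod (u - z) < d -> u <> z0.
Proof.
  intros H. exists (Cmod (z - z0)). split.
  - apply Cmod_gt_0. intros E. apply H. transitivity ((z - z0) + z0)%C; [ring|]. rewrite E; ring.
  - intros u Hu E. subst u. rewrite <- Cmod_opp in Hu.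
    replace (- (z0 - z))%C with (z - z0)%C in Hu by ring. lra.
Qed.

Lemma cif Rr (g : C -> C) (E : list C) z0 l r : 0 < r < Rr -> Cmod z0 < r ->
  (forall z, Cmod z < Rr -> ccont g z) ->
  (forall z, Cmod z < Rr -> ~ In z E -> exists l, cderiv g z l) ->
  cderiv g z0 l ->
  circ (fun z => g z * / (z - z0))%C r = (RtoC (2 * PI) * Ci * g z0)%C.
Proof.
  intros Hr Hz0 Hc Hh Hl.
  set (h := fun z => if Ceq_dec z z0 then l else ((g z - g z0) * / (z - z0))%C).
  set (q := fun z => ((g z - g z0) * / (z - z0))%C).
  assert (Loc : forall z, z <> z0 -> exists d, 0 < d /\ forall u, Cmod (u - z) < d -> h u = q u).
  { intros z Hz. destruct (neq_ball z z0 Hz) as [d [Hd Hd']]. exists d. split; auto.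
    intros u Hu. unfold h, q. destruct (Ceq_dec u z0); auto. exfalso; eapply Hd'; eauto. }
  assert (Hhc : forall z, Cmod z < Rr -> ccont h z).
  { intros z Hz. destruct (Ceq_dec z z0) as [->|Hne].
    - intros eps He. destruct (Hl (eps / 2) ltac:(lra)) as [d [Hd Hd']].
      exists d. split; auto. intros u Hu.
      unfold h. destruct (Ceq_dec z0 z0) as [_|C0]; [|congruence].
      destruct (Ceq_dec u z0) as [->|Hu0].
      + replace (l - l)%C with (RtoC 0) by ring. rewrite Cmod_0. lra.
      + specialize (Hd' (u - z0)%C Hu). replace (z0 + (u - z0))%C with u in Hd' by ring.
        assert (Hk : (u - z0)%C <> RtoC 0).
        { intros E0. apply Hu0. transitivity ((u - z0) + z0)%C; [ring|]. rewrite E0; ring. }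
        replace ((g u - g z0) * / (u - z0) - l)%C with ((g u - g z0 - l * (u - z0)) * / (u - z0))%C
          by (field; auto).
        rewrite Cmod_mult, Cmod_inv by auto.
        assert (0 < Cmod (u - z0)%C) by (apply Cmod_gt_0; auto).
        apply Rle_lt_trans with (eps / 2 * Cmod (u - z0)%C * / Cmod (u - z0)%C).
        * apply Rmult_le_compat_r; auto. apply Rlt_le, Rinv_0_lt_compat; auto.
        * replace (eps / 2 * Cmod (u - z0)%C * / Cmod (u - z0)%C) with (eps / 2) by (field; lra). lra.
    - apply ccont_local with q; auto. unfold q.
      apply ccont_mul. apply ccont_minus. apply Hc; auto. apply ccont_const. apply ccont_inv_sub; auto. }
  assert (Hhh : forall z, Cmod z < Rr -> ~ In z (z0 :: E) -> exists l, cderiv h z l).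
  { intros z Hz Hn. assert (Hne : z <> z0) by (intros E0; apply Hn; left; auto).
    destruct (Hh z Hz) as [lz Hlz]. { intros Hin; apply Hn; right; auto. }
    eexists. apply cderiv_local with q; auto. unfold q.
    apply (cderiv_mult (fun u => g u - g z0)%C (fun u => / (u - z0))%C z (lz - 0)%C).
    apply (cderiv_minus g (fun _ => g z0) z lz (RtoC 0) Hlz (cderiv_const _ _)).
    apply cderiv_inv_sub; auto. }
  pose proof (cauchy_circ Rr h (z0 :: E) ltac:(lra) Hhc Hhh r ltac:(lra)) as Z.
  assert (Hgam : forall t, gam r t <> z0) by (intros; apply gam_neq; auto).
  assert (Hcg : forall t, ccont g (gam r t)) by (intros; apply Hc; rewrite Cmod_gam, Rabs_right; lra).
  rewrite (circ_ext h (fun z => g z * / (z - z0) - g z0 * / (z - z0))%C) in Z.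
  2:{ intros t. unfold h. destruct (Ceq_dec (gam r t) z0) as [E0|_]; [exfalso; eapply Hgam; eauto|]. ring. }
  rewrite circ_minus, circ_cmul, winding in Z; try lra.
  - transitivity (circ (fun z => g z * / (z - z0))%C r - g z0 * (RtoC (2 * PI) * Ci) + g z0 * (RtoC (2 * PI) * Ci))%C; [ring|].
    rewrite Z. ring.
  - intros t. apply ccont_inv_sub; auto.
  - intros t. apply ccont_mul; auto. apply ccont_inv_sub; auto.
  - intros t. apply ccont_mul. apply ccont_const. apply ccont_inv_sub; auto.
Qed.

Lemma bernoulli (x : R) (n : nat) : 0 <= x -> 1 + INR n * x <= (1 + x) ^ n.
Proof.
  intros Hx. induction n as [|n IH].
  - simpl. lra.
  - rewrite S_INR. simpl. assert (0 <= INR n) by apply pos_INR. nra.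
Qed.

Lemma pow_bounded_le1 (lam K : R) : 0 <= lam -> (forall n, lam ^ n <= K) -> lam <= 1.
Proof.
  intros H0 H. apply Rnot_lt_le. intros H1.
  set (x := lam - 1).
  destruct (archimed (K / x)) as [Ha _].
  set (n := Z.to_nat (up (K / x))).
  assert (Hn : K / x < INR n).
  { unfold n. rewrite INR_IZR_INZ. rewrite Z2Nat.id. lra.
    apply le_IZR. pose proof (H O). simpl in H2.
    assert (0 <= K / x) by (apply Rmult_le_pos; [lra| apply Rlt_le, Rinv_0_lt_compat; unfold x; lra]). lra. }
  pose proof (bernoulli x n ltac:(unfold x; lra)) as B.
  replace (1 + x) with lam in B by (unfold x; ring).
  specialize (H n).
  assert (K < INR n * x).
  { apply Rmult_lt_reg_r with (/ x). apply Rinv_0_lt_compat; unfold x; lra.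
    rewrite Rmult_assoc, Rinv_r by (unfold x; lra). rewrite Rmult_1_r. exact Hn. }
  lra.
Qed.

Lemma schwarz (w : C -> C) :
  (forall z, Cmod z < 1 -> exists l, cderiv w z l) -> w (RtoC 0) = RtoC 0 ->
  (forall z, Cmod z < 1 -> Cmod (w z) < 1) ->
  forall z, Cmod z < 1 -> Cmod (w z) <= Cmod z.
Proof.
  intros Hd H0 Hb z0 Hz0.
  destruct (Ceq_dec z0 (RtoC 0)) as [->|Hnz].
  { rewrite H0, Cmod_0. lra. }
  destruct (Hd (RtoC 0)) as [l0 Hl0]. { rewrite Cmod_0; lra. }
  set (phi := fun u => if Ceq_dec u (RtoC 0) then l0 else (w u * / u)%C).
  assert (Loc : forall z, z <> RtoC 0 -> exists d, 0 < d /\ forall u, Cmod (u - z) < d -> phi u = (w u * / u)%C).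
  { intros z Hz. destruct (neq_ball z (RtoC 0) Hz) as [d [Hd0 Hd']]. exists d. split; auto.
    intros u Hu. unfold phi. destruct (Ceq_dec u (RtoC 0)); auto. exfalso; eapply Hd'; eauto. }
  assert (Hpc : forall z, Cmod z < 1 -> ccont phi z).
  { intros z Hz. destruct (Ceq_dec z (RtoC 0)) as [->|Hne].
    - intros eps He. destruct (Hl0 (eps / 2) ltac:(lra)) as [d [Hd0 Hd']].
      exists d. split; auto. intros u Hu.
      unfold phi. destruct (Ceq_dec (RtoC 0) (RtoC 0)) as [_|C0]; [|congruence].
      destruct (Ceq_dec u (RtoC 0)) as [->|Hu0].
      + replace (l0 - l0)%C with (RtoC 0) by ring. rewrite Cmod_0. lra.
      + replace (u - RtoC 0)%C with u in Hu by ring.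
        specialize (Hd' u Hu). replace (RtoC 0 + u)%C with u in Hd' by ring. rewrite H0 in Hd'.
        replace (w u * / u - l0)%C with ((w u - RtoC 0 - l0 * u) * / u)%C by (field; auto).
        rewrite Cmod_mult, Cmod_inv by auto.
        assert (0 < Cmod u) by (apply Cmod_gt_0; auto).
        apply Rle_lt_trans with (eps / 2 * Cmod u * / Cmod u).
        * apply Rmult_le_compat_r; auto. apply Rlt_le, Rinv_0_lt_compat; auto.
        * replace (eps / 2 * Cmod u * / Cmod u) with (eps / 2) by (field; lra). lra.
    - apply ccont_local with (fun u => w u * / u)%C; auto.
      apply ccont_mul. eapply cderiv_ccont'. apply Hd; auto. apply ccont_inv; auto. }
  assert (Hpd : forall z, Cmod z < 1 -> z <> RtoC 0 -> exists l, cderiv phi z l).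
  { intros z Hz Hne. destruct (Hd z Hz) as [lz Hlz].
    eexists. apply cderiv_local with (fun u => w u * / u)%C; auto.
    apply (cderiv_mult w (fun u => / u)%C z lz). auto. apply cderiv_inv_id; auto. }
  assert (Hmain : forall r, Cmod z0 < r < 1 -> Cmod (phi z0) <= / r).
  { intros r Hr.
    assert (Hr0 : 0 < r) by (pose proof (Cmod_ge_0 z0); lra).
    apply Rmult_le_reg_l with r; auto. rewrite Rinv_r by lra.
    apply (pow_bounded_le1 _ (2 * r / (r - Cmod z0))).
    { apply Rmult_le_pos; [lra| apply Cmod_ge_0]. }
    intros n.
    set (psi := fun u => Cpow (phi u) n).
    assert (Hpsic : forall z, Cmod z < 1 -> ccont psi z) by (intros; apply ccont_pow; auto).
    assert (Hpsid : forall z, Cmod z < 1 -> ~ In z (RtoC 0 :: nil) -> exists l, cderiv psi z l).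
    { intros z Hz Hn. destruct (Hpd z Hz) as [lz Hlz]. { intros E0; apply Hn; left; auto. }
      eexists. apply cderiv_pow; eauto. }
    destruct (Hpsid z0 Hz0) as [lp Hlp]. { intros [E0|[]]. apply Hnz; auto. }
    pose proof (cif 1 psi (RtoC 0 :: nil) z0 lp r ltac:(lra) ltac:(lra) Hpsic Hpsid Hlp) as Hcif.
    assert (Hbnd : Cmod (circ (fun z => psi z * / (z - z0))%C r) <= 4 * PI * ((/ r) ^ n / (r - Cmod z0) * r)).
    { apply circ_bound; try lra.
      - intros t. apply ccont_mul. apply Hpsic. rewrite Cmod_gam, Rabs_right; lra. apply ccont_inv_sub. apply gam_neq; lra.
      - intros t. rewrite Cmod_mult. unfold psi. rewrite Cmod_pow, Cmod_inv.
        2:{ intros E0. apply (gam_neq r t z0); [lra|]. transitivity ((gam r t - z0) + z0)%C; [ring|]. rewrite E0; ring. }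
        assert (Hg0 : gam r t <> RtoC 0) by (apply gam_nz; lra).
        assert (Hphi : Cmod (phi (gam r t)) <= / r).
        { unfold phi. destruct (Ceq_dec (gam r t) (RtoC 0)) as [E0|_]; [contradiction|].
          rewrite Cmod_mult, Cmod_inv, Cmod_gam, Rabs_right by (auto; lra).
          assert (Cmod (w (gam r t)) < 1) by (apply Hb; rewrite Cmod_gam, Rabs_right; lra).
          pose proof (Cmod_ge_0 (w (gam r t))).
          assert (0 < / r) by (apply Rinv_0_lt_compat; lra). nra. }
        pose proof (Cmod_gam_sub r t z0 ltac:(lra)).
        assert (0 <= Cmod (phi (gam r t)) ^ n) by (apply pow_le, Cmod_ge_0).
        assert (Cmod (phi (gam r t)) ^ n <= (/ r) ^ n) by (apply pow_incr; split; [apply Cmod_ge_0|auto]).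
        unfold Rdiv. apply Rmult_le_compat; auto.
        + apply Rlt_le, Rinv_0_lt_compat. lra.
        + apply Rinv_le_contravar; lra. }
    rewrite Hcif in Hbnd.
    rewrite !Cmod_mult, Cmod_Ci, Cmod_R, Rabs_right in Hbnd by (pose proof PI_RGT_0; lra).
    unfold psi in Hbnd. rewrite Cmod_pow in Hbnd.
    rewrite Rpow_mult_distr.
    assert (HPI : 0 < PI) by apply PI_RGT_0.
    assert (Hrn : 0 < r ^ n) by (apply pow_lt; lra).
    assert (Hir : (/ r) ^ n * r ^ n = 1).
    { rewrite <- Rpow_mult_distr. rewrite Rinv_l by lra. apply pow1. }
    assert (Cmod (phi z0) ^ n <= 2 * ((/ r) ^ n / (r - Cmod z0) * r)) by nra.
    apply Rle_trans with (r ^ n * (2 * ((/ r) ^ n / (r - Cmod z0) * r))).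
    + apply Rmult_le_compat_l; lra.
    + right. transitivity (2 * ((/ r) ^ n * r ^ n) * r / (r - Cmod z0)); [field; lra|].
      rewrite Hir. field. lra. }
  assert (Hphiz : phi z0 = (w z0 * / z0)%C).
  { unfold phi. destruct (Ceq_dec z0 (RtoC 0)); [contradiction|auto]. }
  rewrite Hphiz, Cmod_mult, Cmod_inv in Hmain by auto.
  assert (Hz : 0 < Cmod z0) by (apply Cmod_gt_0; auto).
  apply Rnot_lt_le. intros Hlt.
  set (r := (1 + Rmax (Cmod z0) (Cmod z0 / Cmod (w z0))) / 2).
  assert (Hw0 : 0 < Cmod (w z0)) by lra.
  assert (Hm1 : Cmod z0 / Cmod (w z0) < 1).
  { apply Rmult_lt_reg_r with (Cmod (w z0)); auto. unfold Rdiv. rewrite Rmult_assoc, Rinv_l by lra. lra. }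
  pose proof (Rmax_l (Cmod z0) (Cmod z0 / Cmod (w z0))).
  pose proof (Rmax_r (Cmod z0) (Cmod z0 / Cmod (w z0))).
  assert (Rmax (Cmod z0) (Cmod z0 / Cmod (w z0)) < 1) by (apply Rmax_lub_lt; lra).
  specialize (Hmain r ltac:(unfold r; lra)).
  assert (Hr : Cmod z0 / Cmod (w z0) < r) by (unfold r; lra).
  assert (Cmod (w z0) * / Cmod z0 * r <= 1).
  { apply Rle_trans with (/ r * r). apply Rmult_le_compat_r; [unfold r; lra|auto]. right; field; unfold r; lra. }
  assert (Cmod z0 < Cmod (w z0) * r).
  { apply Rmult_lt_reg_r with (/ Cmod (w z0)). apply Rinv_0_lt_compat; lra.
    replace (Cmod (w z0) * r * / Cmod (w z0)) with r by (field; lra). exact Hr. }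
  assert (Cmod (w z0) * / Cmod z0 * r * Cmod z0 <= Cmod z0) by nra.
  replace (Cmod (w z0) * / Cmod z0 * r * Cmod z0) with (Cmod (w z0) * r) in H5 by (field; lra).
  lra.
Qed.

Lemma fst_conj_mul_le (a b : C) : fst (Cconj a * b)%C <= Cmod a * Cmod b.
Proof.
  eapply Rle_trans; [apply Rle_abs|]. eapply Rle_trans; [apply re_le_Cmod'|].
  rewrite Cmod_mult, Cmod_conj. lra.
Qed.

Lemma fst_conj_self (a : C) : fst (Cconj a * a)%C = Cmod a * Cmod a.
Proof.
  destruct a as [x y]. unfold Cmod. simpl. rewrite sqrt_sqrt by nra. ring.
Qed.

Lemma is_derive_eqR (f : R -> R) x l1 l2 : l1 = l2 -> is_derive f x l1 -> is_derive f x l2.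
Proof. intros ->; auto. Qed.

Lemma decr_MVT (phi dphi : R -> R) a b : a <= b ->
  (forall t, a <= t <= b -> is_derive phi t (dphi t)) ->
  (forall t, a <= t <= b -> dphi t <= 0) -> phi b <= phi a.
Proof.
  intros Hab Hd Hneg.
  destruct (Req_dec a b) as [->|Hne]; [lra|].
  destruct (MVT_gen phi a b dphi) as [c [Hc E]].
  - intros t Ht. rewrite Rmin_left, Rmax_right in Ht by lra. apply Hd; lra.
  - intros t Ht. rewrite Rmin_left, Rmax_right in Ht by lra.
    apply continuity_pt_filterlim. apply (ex_derive_continuous phi). eexists. apply Hd; lra.
  - rewrite Rmin_left, Rmax_right in Hc by lra.
    specialize (Hneg c Hc). nra.
Qed.

Lemma gronwall_C (Psi dPsi : R -> C) (s : R) : 0 < s <= 1 ->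
  (forall t, s <= t <= 1 -> pderiv Psi t (dPsi t)) ->
  (forall t, s <= t <= 1 -> Cmod (dPsi t) <= Cmod (Psi t) / 2) ->
  Cmod (Psi 1 - Psi s)%C <= Cmod (Psi s) * (exp ((1 - s) / 2) - 1).
Proof.
  intros Hs Hd Hb.
  assert (Ha : forall t, s <= t <= 1 -> Cmod (Psi t) <= Cmod (Psi s) * exp ((t - s) / 2)).
  { intros t Ht.
    set (N := fun u => fst (Psi u) * fst (Psi u) + snd (Psi u) * snd (Psi u)).
    set (dN := fun u => 2 * (fst (Psi u) * fst (dPsi u) + snd (Psi u) * snd (dPsi u))).
    assert (HN : forall u, N u = Cmod (Psi u) * Cmod (Psi u)).
    { intros u. unfold N. rewrite <- fst_conj_self. simpl. ring. }
    assert (HdN : forall u, s <= u <= 1 -> is_derive N u (dN u)).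
    { intros u Hu. unfold N, dN.
      pose proof (pderiv_fst _ _ _ (Hd u Hu)) as H1.
      pose proof (pderiv_snd _ _ _ (Hd u Hu)) as H2.
      pose proof (is_derive_mult _ _ _ _ _ H1 H1 Rmult_comm) as M1.
      pose proof (is_derive_mult _ _ _ _ _ H2 H2 Rmult_comm) as M2.
      pose proof (is_derive_plus _ _ _ _ _ M1 M2) as P.
      eapply is_derive_eqR; [|exact P].
      unfold plus, mult; simpl. ring. }
    assert (HdN' : forall u, s <= u <= 1 -> dN u <= N u).
    { intros u Hu. unfold dN. rewrite HN.
      pose proof (fst_conj_mul_le (Psi u) (dPsi u)) as L. simpl in L.
      pose proof (Hb u Hu). pose proof (Cmod_ge_0 (Psi u)). pose proof (Cmod_ge_0 (dPsi u)).
      nra. }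
    set (M := fun u => N u * exp (- (u - s))).
    assert (HM : N t * exp (- (t - s)) <= N s * exp (- (s - s))).
    { apply (decr_MVT M (fun u => dN u * exp (- (u - s)) - N u * exp (- (u - s))) s t); try lra.
      - intros u Hu. unfold M.
        apply (is_derive_ext (fun u => N u * exp (- (u - s)))); [intros; reflexivity|].
        assert (He : is_derive (fun u => exp (- (u - s))) u (- exp (- (u - s)))) by (auto_derive; auto; unfold Rminus; lra).
        pose proof (is_derive_mult N (fun u => exp (- (u - s))) u _ _ (HdN u ltac:(lra)) He Rmult_comm) as P.
        eapply is_derive_eqR; [|exact P]. unfold plus, mult; simpl. ring.
      - intros u Hu. pose proof (exp_pos (- (u - s))). pose proof (HdN' u ltac:(lra)). nra. }
    replace (s - s) with 0 in HM by ring. rewrite Ropp_0, exp_0, Rmult_1_r in HM.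
    rewrite !HN in HM.
    assert (Ee : exp (t - s) = exp ((t - s) / 2) * exp ((t - s) / 2)) by (rewrite <- exp_plus; f_equal; field).
    assert (HM2 : Cmod (Psi t) * Cmod (Psi t) <= (Cmod (Psi s) * exp ((t - s) / 2)) * (Cmod (Psi s) * exp ((t - s) / 2))).
    { replace ((Cmod (Psi s) * exp ((t - s) / 2)) * (Cmod (Psi s) * exp ((t - s) / 2))) with
        (Cmod (Psi s) * Cmod (Psi s) * exp (t - s)) by (rewrite Ee; ring).
      apply Rmult_le_reg_r with (exp (- (t - s))). apply exp_pos.
      rewrite (Rmult_assoc (Cmod (Psi s) * Cmod (Psi s))), <- exp_plus.
      replace (t - s + - (t - s)) with 0 by ring. rewrite exp_0. lra. }
    pose proof (Cmod_ge_0 (Psi t)). pose proof (Cmod_ge_0 (Psi s)). pose proof (exp_pos ((t - s) / 2)).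
    apply Rsqr_incr_0_var; unfold Rsqr; nra. }
  set (D := (Psi 1 - Psi s)%C).
  destruct (Req_dec (Cmod D) 0) as [HD0|HD0].
  { rewrite HD0. pose proof (Cmod_ge_0 (Psi s)). assert (1 <= exp ((1 - s) / 2)).
    { pose proof (exp_ineq1_le ((1 - s) / 2)). lra. }
    nra. }
  set (K := Cmod D * Cmod (Psi s)).
  set (phi := fun t => fst (Cconj D * Psi t)%C - K * exp ((t - s) / 2)).
  set (dphi := fun t => fst (Cconj D * dPsi t)%C - K * (exp ((t - s) / 2) * / 2)).
  assert (Hphi : phi 1 <= phi s).
  { apply (decr_MVT phi dphi s 1); try lra.
    - intros t Ht. unfold phi, dphi.
      apply (is_derive_minus (fun t => fst (Cconj D * Psi t)%C) (fun t => K * exp ((t - s) / 2))).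
      + apply (pderiv_fst (fun t => Cconj D * Psi t)%C).
        apply (pderiv_comp (fun z => Cconj D * z)%C Psi). apply Hd; auto.
        eapply cderiv_eq; [|apply cderiv_scal, cderiv_id]. ring.
      + apply is_derive_scal.
        auto_derive; auto. unfold Rminus, Rdiv. lra.
    - intros t Ht. unfold dphi.
      pose proof (fst_conj_mul_le D (dPsi t)).
      pose proof (Hb t Ht). pose proof (Ha t Ht).
      pose proof (Cmod_ge_0 D). pose proof (exp_pos ((t - s) / 2)).
      unfold K. nra. }
  unfold phi in Hphi.
  replace ((s - s) / 2) with 0 in Hphi by field. rewrite exp_0 in Hphi.
  assert (E1 : fst (Cconj D * Psi 1)%C - fst (Cconj D * Psi s)%C = Cmod D * Cmod D).
  { rewrite <- fst_conj_self. unfold D. simpl. ring. }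
  assert (Cmod D * Cmod D <= Cmod D * (Cmod (Psi s) * (exp ((1 - s) / 2) - 1))).
  { unfold K in Hphi. nra. }
  pose proof (Cmod_ge_0 D).
  apply Rmult_le_reg_l with (Cmod D). lra. fold D. lra.
Qed.

Lemma q_bound (A B : C) (gamma : R) (f f1 f2 : C -> C) :
  (Cmod A <= 1)%R -> (Cmod B < 1)%R -> (0 < gamma)%R ->
  (gamma >= 4 * (Cmod A + Cmod B) / (1 - Cmod B))%R ->
  subordinate
    (fun z => 1 + RtoC gamma * (1 + z * f2 z / f1 z - zfp_over_f f f1 z))%C
    (fun z => (1 + A * z) / (1 + B * z))%C ->
  forall z, Cmod z < 1 -> Cmod (1 + z * f2 z / f1 z - zfp_over_f f f1 z)%C <= Cmod z / 4.
Proof.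
  intros HA HB Hg Hgam [w [Hw [Hw0 [HwD Heq]]]] z Hz.
  assert (Sch : Cmod (w z) <= Cmod z).
  { apply (schwarz w).
    - intros u Hu. apply ex_derive_cderiv. apply Hw. exact Hu.
    - exact Hw0.
    - intros u Hu. apply HwD. exact Hu.
    - exact Hz. }
  specialize (Heq z Hz). simpl in Heq.
  set (Q := (1 + z * f2 z / f1 z - zfp_over_f f f1 z)%C) in *.
  set (wz := w z) in *.
  assert (Hwz : Cmod wz < 1) by (apply HwD; exact Hz).
  assert (HBw : Cmod (B * wz)%C < 1).
  { rewrite Cmod_mult. pose proof (Cmod_ge_0 B). pose proof (Cmod_ge_0 wz). nra. }
  assert (Hden : 1 - Cmod B <= Cmod (1 + B * wz)%C).
  { pose proof (Cmod_triangle (1 + B * wz) (- (B * wz)))%C as T.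
    replace (1 + B * wz + - (B * wz))%C with (RtoC 1) in T by ring.
    rewrite Cmod_opp, Cmod_1, Cmod_mult in T.
    pose proof (Cmod_ge_0 B). pose proof (Cmod_ge_0 wz). nra. }
  assert (Hden0 : (1 + B * wz)%C <> RtoC 0).
  { intros E. rewrite E, Cmod_0 in Hden. lra. }
  assert (HgQ : (RtoC gamma * Q)%C = ((A - B) * wz / (1 + B * wz))%C).
  { transitivity ((1 + RtoC gamma * Q) - 1)%C; [ring|]. rewrite Heq. field. auto. }
  assert (HgQm : gamma * Cmod Q <= (Cmod A + Cmod B) * Cmod z / (1 - Cmod B)).
  { replace (gamma * Cmod Q) with (Cmod (RtoC gamma * Q)%C) by (rewrite Cmod_mult, Cmod_R, Rabs_right; lra).
    rewrite HgQ. unfold Cdiv. rewrite !Cmod_mult, Cmod_inv by auto.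
    assert (Cmod (A - B)%C <= Cmod A + Cmod B).
    { unfold Cminus. eapply Rle_trans; [apply Cmod_triangle|]. rewrite Cmod_opp. lra. }
    assert (0 < 1 - Cmod B) by lra.
    assert (/ Cmod (1 + B * wz)%C <= / (1 - Cmod B)) by (apply Rinv_le_contravar; lra).
    pose proof (Cmod_ge_0 (A - B)%C). pose proof (Cmod_ge_0 wz).
    assert (0 < / Cmod (1 + B * wz)%C) by (apply Rinv_0_lt_compat; lra).
    unfold Rdiv.
    apply Rle_trans with (Cmod (A - B)%C * Cmod wz * / (1 - Cmod B)).
    - apply Rmult_le_compat_l; auto. apply Rmult_le_pos; auto.
    - apply Rmult_le_compat_r. apply Rlt_le, Rinv_0_lt_compat; lra.
      apply Rmult_le_compat; auto. }
  assert (HB1 : 0 < 1 - Cmod B) by lra.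
  assert (Hgam' : (Cmod A + Cmod B) / (1 - Cmod B) <= gamma / 4).
  { unfold Rdiv in *. lra. }
  assert ((Cmod A + Cmod B) * Cmod z / (1 - Cmod B) <= gamma / 4 * Cmod z).
  { replace ((Cmod A + Cmod B) * Cmod z / (1 - Cmod B)) with ((Cmod A + Cmod B) / (1 - Cmod B) * Cmod z) by (field; lra).
    apply Rmult_le_compat_r; auto. apply Cmod_ge_0. }
  apply Rmult_le_reg_l with gamma; auto. lra.
Qed.

Lemma exp_half_bound : exp (1 / 2) <= 7 / 4.
Proof.
  assert (E : exp 1 = exp (1 / 2) * exp (1 / 2)) by (rewrite <- exp_plus; f_equal; field).
  pose proof exp_le_3. pose proof (exp_pos (1 / 2)). nra.
Qed.

Lemma main_at (f f1 f2 : C -> C) (z : C) :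
  (forall u, Cmod u < 1 -> cderiv f u (f1 u)) ->
  (forall u, Cmod u < 1 -> cderiv f1 u (f2 u)) ->
  f (RtoC 0) = RtoC 0 -> f1 (RtoC 0) = RtoC 1 ->
  (forall u, Cmod u < 1 -> f1 u <> RtoC 0) ->
  (forall u, Cmod u < 1 -> u <> RtoC 0 -> f u <> RtoC 0) ->
  (forall u, Cmod u < 1 -> Cmod (1 + u * f2 u / f1 u - zfp_over_f f f1 u)%C <= Cmod u / 4) ->
  Cmod z < 1 -> z <> RtoC 0 ->
  Cmod (z * f1 z / f z * (z * f1 z / f z) - 1)%C < 1.
Proof.
  intros Hf Hf1 H0 H1 Hf1nz Hfnz Hq Hz Hz0.
  set (p := fun u => (u * f1 u / f u)%C).
  set (dp := fun u => (((1 * f1 u + u * f2 u) * f u - u * f1 u * f1 u) / (f u * f u))%C).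
  assert (Hzpos : 0 < Cmod z) by (apply Cmod_gt_0; auto).
  assert (Hpath : forall t, 0 < t <= 1 -> Cmod (RtoC t * z)%C < 1 /\ (RtoC t * z)%C <> RtoC 0).
  { intros t Ht. rewrite Cmod_mult, Cmod_R, Rabs_right by lra. split. nra.
    intros E. apply (f_equal Cmod) in E. rewrite Cmod_mult, Cmod_R, Rabs_right, Cmod_0 in E by lra. nra. }
  assert (Hpd : forall u, Cmod u < 1 -> u <> RtoC 0 -> cderiv p u (dp u)).
  { intros u Hu Hu0. unfold p, dp.
    apply (cderiv_div (fun u => u * f1 u)%C f u).
    - apply Hfnz; auto.
    - apply (cderiv_mult (fun u => u) f1 u 1 (f2 u)). apply cderiv_id. apply Hf1; auto.
    - apply Hf; auto. }
  set (Psi := fun t : R => (p (RtoC t * z) * p (RtoC t * z))%C).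
  set (dPsi := fun t : R => ((dp (RtoC t * z) * p (RtoC t * z) + p (RtoC t * z) * dp (RtoC t * z)) * z)%C).
  assert (HPd : forall t, 0 < t <= 1 -> pderiv Psi t (dPsi t)).
  { intros t Ht. destruct (Hpath t Ht) as [Hu Hu0].
    unfold Psi, dPsi.
    apply (pderiv_ext (fun s => (fun u => p u * p u)%C ((0 + RtoC s * z)%C))).
    { intros s. f_equal; f_equal; ring. }
    replace (RtoC t * z)%C with (0 + RtoC t * z)%C by ring.
    apply (pderiv_comp (fun u => p u * p u)%C (fun s => 0 + RtoC s * z)%C t z). apply pderiv_affine.
    apply cderiv_mult; apply Hpd; replace (0 + RtoC t * z)%C with (RtoC t * z)%C by ring; auto. }
  assert (HPb : forall t, 0 < t <= 1 -> Cmod (dPsi t) <= Cmod (Psi t) / 2).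
  { intros t Ht. destruct (Hpath t Ht) as [Hu Hu0].
    set (u := (RtoC t * z)%C) in *.
    assert (Hfu : f u <> RtoC 0) by (apply Hfnz; auto).
    assert (Hf1u : f1 u <> RtoC 0) by (apply Hf1nz; auto).
    assert (Hzfp : zfp_over_f f f1 u = p u).
    { unfold zfp_over_f. destruct (Ceq_dec u 0); [contradiction|reflexivity]. }
    specialize (Hq u Hu). rewrite Hzfp in Hq.
    assert (Hid : (dPsi t * RtoC t)%C = (RtoC 2 * Psi t * (1 + u * f2 u / f1 u - p u))%C).
    { unfold dPsi, Psi, p, dp. fold u.
      assert (RtoC t <> RtoC 0) by (intros E; injection E; lra).
      replace z with (u / RtoC t)%C by (unfold u; field; auto).
      field. repeat split; auto. }
    apply (f_equal Cmod) in Hid. rewrite !Cmod_mult, !Cmod_R, !Rabs_right in Hid by lra.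
    assert (Cmod u = t * Cmod z) by (unfold u; rewrite Cmod_mult, Cmod_R, Rabs_right; lra).
    pose proof (Cmod_ge_0 (Psi t)). pose proof (Cmod_ge_0 (dPsi t)).
    assert (Cmod (dPsi t) * t <= 2 * Cmod (Psi t) * (t * Cmod z / 4)) by (rewrite Hid; nra).
    assert (Cmod (dPsi t) <= 2 * Cmod (Psi t) * (Cmod z / 4)).
    { apply Rmult_le_reg_r with t; [lra|]. nra. }
    nra. }
  assert (Hlim : exists s, 0 < s <= 1 /\ Cmod (Psi s - 1)%C <= 1 / 10).
  { set (eta := 1 / 100).
    destruct (Hf (RtoC 0) ltac:(rewrite Cmod_0; lra) eta ltac:(unfold eta; lra)) as [d1 [Hd1 Hd1']].
    destruct (cderiv_ccont _ _ _ (Hf1 (RtoC 0) ltac:(rewrite Cmod_0; lra)) eta ltac:(unfold eta; lra)) as [d2 [Hd2 Hd2']].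
    set (d := Rmin 1 (Rmin d1 d2)).
    assert (Hd : 0 < d) by (unfold d; repeat apply Rmin_pos; lra).
    set (s := Rmin (1 / 2) (d / (2 * Cmod z))).
    assert (Hs : 0 < s) by (unfold s; apply Rmin_pos; [lra| apply Rdiv_lt_0_compat; lra]).
    assert (Hs1 : s <= 1 / 2) by apply Rmin_l.
    assert (Hs2 : s <= d / (2 * Cmod z)) by apply Rmin_r.
    exists s. split; [lra|].
    set (u := (RtoC s * z)%C).
    assert (Hu : Cmod u = s * Cmod z) by (unfold u; rewrite Cmod_mult, Cmod_R, Rabs_right; lra).
    assert (Hud : Cmod u < d).
    { rewrite Hu. apply Rle_lt_trans with (d / (2 * Cmod z) * Cmod z). apply Rmult_le_compat_r; lra.
      replace (d / (2 * Cmod z) * Cmod z) with (d / 2) by (field; lra). lra. }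
    assert (d <= d1 /\ d <= d2) by (unfold d; split; [apply Rle_trans with (Rmin d1 d2); [apply Rmin_r|apply Rmin_l] | apply Rle_trans with (Rmin d1 d2); [apply Rmin_r|apply Rmin_r]]).
    specialize (Hd1' u ltac:(lra)). specialize (Hd2' u). replace (u - RtoC 0)%C with u in Hd2' by ring.
    specialize (Hd2' ltac:(lra)).
    replace (RtoC 0 + u)%C with u in Hd1' by ring. rewrite H0, H1 in Hd1'. rewrite H1 in Hd2'.
    replace (f u - RtoC 0 - RtoC 1 * u)%C with (f u - u)%C in Hd1' by ring.
    assert (Hu0 : 0 < Cmod u) by (rewrite Hu; nra).
    assert (Hfu : (1 - eta) * Cmod u <= Cmod (f u)).
    { pose proof (Cmod_triangle (f u) (- (f u - u)))%C as T.
      replace (f u + - (f u - u))%C with u in T by ring. rewrite Cmod_opp in T. lra. }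
    assert (Hfu0 : f u <> RtoC 0).
    { intros E. rewrite E, Cmod_0 in Hfu. unfold eta in Hfu. nra. }
    assert (Hnum : Cmod (u * f1 u - f u)%C <= 2 * eta * Cmod u).
    { replace (u * f1 u - f u)%C with (u * (f1 u - 1) - (f u - u))%C by ring.
      unfold Cminus at 1. eapply Rle_trans; [apply Cmod_triangle|]. rewrite Cmod_opp, Cmod_mult.
      pose proof (Cmod_ge_0 u). nra. }
    assert (Hp1 : Cmod (p u - 1)%C <= 1 / 40).
    { unfold p. replace (u * f1 u / f u - 1)%C with ((u * f1 u - f u) / f u)%C by (field; auto).
      unfold Cdiv. rewrite Cmod_mult, Cmod_inv by auto.
      assert (0 < Cmod (f u)) by (unfold eta in Hfu; nra).
      apply Rmult_le_reg_r with (Cmod (f u)); auto.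
      rewrite Rmult_assoc, Rinv_l by lra. rewrite Rmult_1_r.
      unfold eta in *. nra. }
    unfold Psi. fold u.
    replace (p u * p u - 1)%C with ((p u - 1) * ((p u - 1) + RtoC 2))%C by ring.
    rewrite Cmod_mult.
    assert (Cmod ((p u - 1) + RtoC 2)%C <= 1 / 40 + 2).
    { eapply Rle_trans; [apply Cmod_triangle|]. rewrite Cmod_R, Rabs_right by lra. lra. }
    pose proof (Cmod_ge_0 (p u - 1)%C). pose proof (Cmod_ge_0 ((p u - 1) + RtoC 2)%C). nra. }
  destruct Hlim as [s [Hs HPs]].
  pose proof (gronwall_C Psi dPsi s Hs ltac:(intros; apply HPd; lra) ltac:(intros; apply HPb; lra)) as G.
  assert (Hexp : exp ((1 - s) / 2) <= 7 / 4).
  { eapply Rle_trans; [|apply exp_half_bound].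
    destruct (Req_dec ((1 - s) / 2) (1 / 2)) as [E|E]; [rewrite E; lra|].
    left. apply exp_increasing. lra. }
  assert (HPs' : Cmod (Psi s) <= 1 + 1 / 10).
  { pose proof (Cmod_triangle (Psi s - 1) 1)%C as T. replace (Psi s - 1 + 1)%C with (Psi s) in T by ring.
    rewrite Cmod_1 in T. lra. }
  assert (Hexp1 : 1 <= exp ((1 - s) / 2)) by (pose proof (exp_ineq1_le ((1 - s) / 2)); lra).
  assert (Cmod (Psi 1 - Psi s)%C <= (1 + 1 / 10) * (7 / 4 - 1)).
  { eapply Rle_trans; [exact G|]. pose proof (Cmod_ge_0 (Psi s)). nra. }
  assert (E1 : Psi 1 = (z * f1 z / f z * (z * f1 z / f z))%C).
  { unfold Psi, p. replace (RtoC 1 * z)%C with z by ring. reflexivity. }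
  rewrite <- E1.
  replace (Psi 1 - 1)%C with ((Psi 1 - Psi s) + (Psi s - 1))%C by ring.
  eapply Rle_lt_trans; [apply Cmod_triangle|]. lra.
Qed.

End Helpers.
Import Helpers.

Theorem corollary2p2 (A B : C) (gamma : R) (f f1 f2 : C -> C) :
  (Cmod A <= 1)%R -> (Cmod B < 1)%R ->
  (0 < gamma)%R ->
  (gamma >= 4 * (Cmod A + Cmod B) / (1 - Cmod B))%R ->
  classA f f1 ->
  has_deriv_on_D f1 f2 ->
  (* the left-hand side of the subordination is analytic in D *)
  (forall z, inD z -> f1 z <> 0) ->
  (forall z, inD z -> z <> 0 -> f z <> 0) ->
  subordinate
    (fun z => 1 + RtoC gamma * (1 + z * f2 z / f1 z - zfp_over_f f f1 z))
    (fun z => (1 + A * z) / (1 + B * z)) ->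
  SLstar f f1.
Proof.
  intros HA HB Hg Hgam [Hfa [Hfd [H0 H1]]] Hf2 Hf1nz Hfnz Hsub.
  split; [exact Hfnz|].
  intros z Hz. unfold inD in *.
  pose proof (q_bound A B gamma f f1 f2 HA HB Hg Hgam Hsub) as Hq.
  destruct (Ceq_dec z 0) as [Ez|Hz0].
  - unfold zfp_over_f. destruct (Ceq_dec z 0) as [_|C0]; [|contradiction].
    simpl. replace (1 * (1 * 1) - 1)%C with (RtoC 0) by ring. rewrite Cmod_0. lra.
  - unfold zfp_over_f. destruct (Ceq_dec z 0) as [C0|_]; [contradiction|].
    change (Cpow (z * f1 z / f z) 2) with ((z * f1 z / f z) * ((z * f1 z / f z) * 1))%C.
    rewrite Cmult_1_r.
    apply (main_at f f1 f2 z); auto.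
    + intros u Hu. apply is_derive_cderiv. apply Hfd. exact Hu.
    + intros u Hu. apply is_derive_cderiv. apply Hf2. exact Hu.
Qed.
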